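(* Let $a_n^{\mathrm{cyclic}}$ denote the number of cocyclic subrings of $\mathbb{Z}[t]/(t^3)$ of index $n$. (i) For every prime $p$, \[ \sum_{k\ge0}a_{p^k}^{\mathrm{cyclic}}\,p^{-ks}=\frac{1+p^{-s}+p^{1-2s}}{1-p^{2-3s}} . \] (ii) For $\operatorname{Re}(s)$ sufficiently large, \[ \sum_{n=1}^\infty \frac{a_n^{\mathrm{cyclic}}}{n^s}=\zeta(s)\,\zeta(2s-1)\,\zeta(3s-2)\prod_p\bigl(1-p^{-2s}-p^{1-3s}+p^{1-4s}-p^{2-4s}+p^{2-5s}\bigr), \] where the product runs over all primes and $\zeta$ denotes the Riemann zeta function.
   Context: A subring of $R=\mathbb{Z}[t]/(t^3)$ means an additive subgroup of finite index that contains $1$ and is closed under multiplication. For a finite-index subgroup $S\subseteq R\cong\mathbb{Z}^3$ there are unique positive integers $\alpha_1(S),\alpha_2(S),\alpha_3(S)$ with $\alpha_{i+1}\mid\alpha_i$ and $R/S\cong\bigoplus_{i=1}^3\mathbb{Z}/\alpha_i\mathbb{Z}$. The subgroup $S$ is called cocyclic if $R/S$ is cyclic. For a subring this is equivalent to $\alpha_2(S)=1$. *)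

(* Defs.v *)
From Stdlib Require Import ZArith List Reals ClassicalEpsilon Znumtheory.
From Coquelicot Require Import Coquelicot.
Import ListNotations.

(* An element (a, b, c) represents a + b t + c t^2. *)
Definition Rt3 : Type := (Z * Z * Z)%type.

Definition rzero : Rt3 := (0, 0, 0)%Z.
Definition rone : Rt3 := (1, 0, 0)%Z.
Definition radd (x y : Rt3) : Rt3 :=
  let '(a, b, c) := x in let '(a', b', c') := y in (a + a', b + b', c + c')%Z.
Definition ropp (x : Rt3) : Rt3 := let '(a, b, c) := x in (- a, - b, - c)%Z.
Definition rmul (x y : Rt3) : Rt3 :=
  let '(a, b, c) := x in let '(a', b', c') := y in
  (a * a', a * b' + b * a', a * c' + b * b' + c * a')%Z.
Definition rscale (k : Z) (x : Rt3) : Rt3 :=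
  let '(a, b, c) := x in (k * a, k * b, k * c)%Z.

Definition is_add_subgroup (S : Rt3 -> Prop) : Prop :=
  S rzero /\ (forall x y, S x -> S y -> S (radd x y)) /\
  (forall x, S x -> S (ropp x)).

Definition congr (S : Rt3 -> Prop) (x y : Rt3) : Prop := S (radd x (ropp y)).

Definition has_index (S : Rt3 -> Prop) (n : nat) : Prop :=
  exists reps : list Rt3, length reps = n /\
    (forall i j, (i < n)%nat -> (j < n)%nat ->
       congr S (nth i reps rzero) (nth j reps rzero) -> i = j) /\
    (forall x, exists i, (i < n)%nat /\ congr S x (nth i reps rzero)).

Definition finite_index (S : Rt3 -> Prop) : Prop := exists n, has_index S n.

Definition is_subring (S : Rt3 -> Prop) : Prop :=
  is_add_subgroup S /\ finite_index S /\ S rone /\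
  (forall x y, S x -> S y -> S (rmul x y)).

Definition cocyclic (S : Rt3 -> Prop) : Prop :=
  exists g : Rt3, forall x, exists k : Z, congr S x (rscale k g).

Definition set_equiv (S T : Rt3 -> Prop) : Prop := forall x, S x <-> T x.

Definition counts (P : (Rt3 -> Prop) -> Prop) (k : nat) : Prop :=
  exists L : list (Rt3 -> Prop), length L = k /\
    (forall S, In S L -> P S) /\
    (forall i j, (i < k)%nat -> (j < k)%nat ->
       set_equiv (nth i L (fun _ => False)) (nth j L (fun _ => False)) -> i = j) /\
    (forall S, P S -> exists T, In T L /\ set_equiv S T).

Definition cocyclic_subring_of_index (n : nat) (S : Rt3 -> Prop) : Prop :=
  is_subring S /\ cocyclic S /\ has_index S n.

(* a_n^cyclic : the number of cocyclic subrings of index n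
   (0 by convention if there were infinitely many; there are not). *)
Definition a_cyclic (n : nat) : nat :=
  match excluded_middle_informative
          (exists k, counts (cocyclic_subring_of_index n) k) with
  | left H => proj1_sig (constructive_indefinite_description _ H)
  | right _ => 0%nat
  end.

(* x ^ s := exp (s ln x) for real x > 0 and complex s *)
Definition cpow (x : R) (s : C) : C :=
  let r := exp (Re s * ln x) in
  (r * cos (Im s * ln x), r * sin (Im s * ln x))%R.

Definition CSeries (a : nat -> C) : C :=
  (Series (fun n => Re (a n)), Series (fun n => Im (a n))).

(* Riemann zeta via its Dirichlet series (valid for Re s > 1) *)
Definition zeta (s : C) : C := CSeries (fun n => cpow (INR (S n)) (- s)).

Definition prime_prod (f : nat -> C) (N : nat) : C :=
  fold_right (fun p acc => if prime_dec (Z.of_nat p) then Cmult (f p) acc else acc)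
             (RtoC 1) (seq 0 (S N)).

(* Main.v *)
Require Import Defs.
From Stdlib Require Import ZArith List Reals Znumtheory.
From Stdlib Require Import Lia Lra Permutation ClassicalEpsilon Classical FunctionalExtensionality.
From Coquelicot Require Import Coquelicot.
Import ListNotations.

Module H.
Local Open Scope C_scope.

Lemma Cmod_Re_le (z : C) : (Rabs (Re z) <= Cmod z)%R.
Proof. apply re_le_Cmod. Qed.

Lemma Cmod_Im_le (z : C) : (Rabs (Im z) <= Cmod z)%R.
Proof.
  destruct z as [a b]. unfold Cmod, Im; simpl.
  rewrite <- sqrt_Rsqr_abs. apply sqrt_le_1_alt. unfold Rsqr. nra.
Qed.

Lemma Cmod_le_ReIm (z : C) : (Cmod z <= Rabs (Re z) + Rabs (Im z))%R.
Proof.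
  destruct z as [a b]. unfold Cmod, Re, Im; simpl.
  rewrite <- (sqrt_Rsqr (Rabs a + Rabs b)) by (pose proof (Rabs_pos a); pose proof (Rabs_pos b); lra).
  apply sqrt_le_1_alt. unfold Rsqr.
  pose proof (Rabs_pos a); pose proof (Rabs_pos b).
  assert (Ha : (a*a = Rabs a * Rabs a)%R) by (rewrite <- Rabs_mult; rewrite Rabs_right; nra).
  assert (Hb : (b*b = Rabs b * Rabs b)%R) by (rewrite <- Rabs_mult; rewrite Rabs_right; nra).
  nra.
Qed.

Definition Ccv (u : nat -> C) (l : C) : Prop :=
  forall eps : R, (0 < eps)%R -> exists N, forall n, (N <= n)%nat -> (Cmod (u n - l) < eps)%R.

Lemma Ccv_filterlim u l : Ccv u l <-> filterlim u eventually (locally l).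
Proof.
  split.
  - intros H. apply filterlim_locally. intros eps.
    destruct (H eps (cond_pos eps)) as [N HN]. exists N. intros n Hn.
    specialize (HN n Hn). split.
    + change (Rabs (fst (u n) - fst l) < eps)%R.
      eapply Rle_lt_trans; [|exact HN].
      replace (fst (u n) - fst l)%R with (Re (u n - l)) by (simpl; ring).
      apply Cmod_Re_le.
    + change (Rabs (snd (u n) - snd l) < eps)%R.
      eapply Rle_lt_trans; [|exact HN].
      replace (snd (u n) - snd l)%R with (Im (u n - l)) by (simpl; ring).
      apply Cmod_Im_le.
  - intros H eps Heps. assert (He2 : (0 < eps/2)%R) by lra.
    destruct (proj1 (filterlim_locally u l) H (mkposreal _ He2)) as [N HN].
    exists N. intros n Hn. destruct (HN n Hn) as [H1 H2].
    change (Rabs (fst (u n) - fst l) < eps/2)%R in H1.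
    change (Rabs (snd (u n) - snd l) < eps/2)%R in H2.
    eapply Rle_lt_trans; [apply Cmod_le_ReIm|].
    replace (Re (u n - l)) with (fst (u n) - fst l)%R by (simpl; ring).
    replace (Im (u n - l)) with (snd (u n) - snd l)%R by (simpl; ring).
    lra.
Qed.

Definition Ccv2 (u : nat -> C) (l : C) : Prop :=
  is_lim_seq (fun n => Re (u n)) (Re l) /\ is_lim_seq (fun n => Im (u n)) (Im l).

Lemma Ccv2_Ccv u l : Ccv2 u l <-> Ccv u l.
Proof.
  split.
  - intros [H1 H2] eps Heps. assert (He2 : (0 < eps/2)%R) by lra.
    apply is_lim_seq_spec in H1. apply is_lim_seq_spec in H2.
    destruct (H1 (mkposreal _ He2)) as [N1 HN1].
    destruct (H2 (mkposreal _ He2)) as [N2 HN2].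
    exists (max N1 N2). intros n Hn.
    specialize (HN1 n ltac:(lia)). specialize (HN2 n ltac:(lia)). simpl in HN1, HN2.
    eapply Rle_lt_trans; [apply Cmod_le_ReIm|].
    replace (Re (u n - l)) with (Re (u n) - Re l)%R by (simpl; unfold Re; ring).
    replace (Im (u n - l)) with (Im (u n) - Im l)%R by (simpl; unfold Im; ring).
    lra.
  - intros H. split; apply is_lim_seq_spec; intros eps;
      destruct (H eps (cond_pos eps)) as [N HN]; exists N; intros n Hn; specialize (HN n Hn).
    + eapply Rle_lt_trans; [|exact HN].
      replace (Re (u n) - Re l)%R with (Re (u n - l)) by (simpl; unfold Re; ring).
      apply Cmod_Re_le.
    + eapply Rle_lt_trans; [|exact HN].
      replace (Im (u n) - Im l)%R with (Im (u n - l)) by (simpl; unfold Im; ring).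
      apply Cmod_Im_le.
Qed.

Lemma Ccv_mult u v a b : Ccv u a -> Ccv v b -> Ccv (fun n => u n * v n) (a * b).
Proof.
  rewrite <- !Ccv2_Ccv. intros [H1 H2] [H3 H4]. split; simpl.
  - apply is_lim_seq_minus'; apply is_lim_seq_mult'; auto.
  - apply is_lim_seq_plus'; apply is_lim_seq_mult'; auto.
Qed.

Lemma Ccv_const a : Ccv (fun _ => a) a.
Proof. intros eps He. exists O. intros n _. replace (a - a) with (RtoC 0) by ring.
  rewrite Cmod_0. lra. Qed.

Lemma Ccv_unique u a b : Ccv u a -> Ccv u b -> a = b.
Proof.
  rewrite !Ccv_filterlim. intros H1 H2.
  exact (filterlim_locally_unique (K:=C_AbsRing) (V:=C_NormedModule) u a b H1 H2).
Qed.

Lemma Ccv_le u l a c : Ccv u l -> (exists N, forall n, (N <= n)%nat -> (Cmod (u n - a) <= c)%R) ->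
  (Cmod (l - a) <= c)%R.
Proof.
  intros H [N HN]. destruct (Rle_lt_dec (Cmod (l - a)) c) as [?|Hlt]; auto. exfalso.
  destruct (H (Cmod (l - a) - c)%R ltac:(lra)) as [M HM].
  specialize (HM (max N M) ltac:(lia)). specialize (HN (max N M) ltac:(lia)).
  pose proof (Cmod_triangle (l - u (max N M)) (u (max N M) - a)) as T.
  replace (l - u (max N M) + (u (max N M) - a)) with (l - a) in T by ring.
  replace (l - u (max N M)) with (- (u (max N M) - l)) in T by ring.
  rewrite Cmod_opp in T. lra.
Qed.

Lemma sum_n_Re (a : nat -> C) n : Re (sum_n a n) = sum_n (fun k => Re (a k)) n.
Proof.
  induction n.
  - rewrite !sum_O. reflexivity.
  - rewrite !sum_Sn. rewrite <- IHn. reflexivity.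
Qed.

Lemma sum_n_Im (a : nat -> C) n : Im (sum_n a n) = sum_n (fun k => Im (a k)) n.
Proof.
  induction n.
  - rewrite !sum_O. reflexivity.
  - rewrite !sum_Sn. rewrite <- IHn. reflexivity.
Qed.

Lemma is_series_Ccv (a : nat -> C) l : is_series a l <-> Ccv (sum_n a) l.
Proof. rewrite Ccv_filterlim. reflexivity. Qed.

Lemma CSeries_correct (a : nat -> C) l : is_series a l -> CSeries a = l.
Proof.
  intros H. apply is_series_Ccv in H. apply Ccv2_Ccv in H. destruct H as [H1 H2].
  unfold CSeries. destruct l as [l1 l2].
  assert (E1 : Series (fun n => Re (a n)) = l1).
  { apply is_series_unique. unfold is_series.
    apply (is_lim_seq_ext _ _ _ (fun n => sum_n_Re a n)) in H1. exact H1. }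
  assert (E2 : Series (fun n => Im (a n)) = l2).
  { apply is_series_unique. unfold is_series.
    apply (is_lim_seq_ext _ _ _ (fun n => sum_n_Im a n)) in H2. exact H2. }
  rewrite E1, E2. reflexivity.
Qed.

End H.
Import H.

Module H2.
Local Open Scope C_scope.

Lemma exp_le x y : (x <= y)%R -> (exp x <= exp y)%R.
Proof. intros [H|H]. left; apply exp_increasing; auto. subst; lra. Qed.

Lemma cpow_add x a b : cpow x (a + b) = cpow x a * cpow x b.
Proof.
  destruct a as [a1 a2], b as [b1 b2]. unfold cpow, Cmult, Re, Im; simpl.
  rewrite !Rmult_plus_distr_r, exp_plus, cos_plus, sin_plus.
  f_equal; ring.
Qed.

Lemma cpow_mulb x y s : (0 < x)%R -> (0 < y)%R -> cpow (x * y) s = cpow x s * cpow y s.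
Proof.
  intros Hx Hy. destruct s as [a1 a2]. unfold cpow, Cmult, Re, Im; simpl.
  rewrite ln_mult by auto.
  rewrite !Rmult_plus_distr_l, exp_plus, cos_plus, sin_plus.
  f_equal; ring.
Qed.

Lemma Cmod_cpow x s : Cmod (cpow x s) = exp (Re s * ln x).
Proof.
  unfold cpow, Cmod; cbn [fst snd].
  set (r := exp (Re s * ln x)). set (t := (Im s * ln x)%R).
  replace ((r * cos t) ^ 2 + (r * sin t) ^ 2)%R with (r ^ 2)%R.
  - apply sqrt_pow2. unfold r. left. apply exp_pos.
  - pose proof (sin2_cos2 t) as E. unfold Rsqr in E. 
    replace ((r * cos t) ^ 2 + (r * sin t) ^ 2)%R with (r^2 * (sin t * sin t + cos t * cos t))%R by ring.
    rewrite E. ring.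
Qed.

Lemma cpow_one_base s : cpow 1 s = 1.
Proof.
  unfold cpow. rewrite ln_1, !Rmult_0_r, exp_0, cos_0, sin_0.
  unfold RtoC. f_equal; ring.
Qed.

Lemma cpow_real_one x : (0 < x)%R -> cpow x 1 = RtoC x.
Proof.
  intros Hx. unfold cpow. simpl. rewrite Rmult_0_l, cos_0, sin_0, Rmult_1_l, exp_ln by auto.
  unfold RtoC. f_equal; ring.
Qed.

Lemma cpow_zero x : cpow x 0 = 1.
Proof. unfold cpow. simpl. rewrite !Rmult_0_l, exp_0, cos_0, sin_0. unfold RtoC. f_equal; ring. Qed.

Lemma cpow_powb x s k : (0 < x)%R -> cpow (x ^ k) s = (cpow x s) ^ k.
Proof.
  intros Hx. induction k.
  - simpl. apply cpow_one_base.
  - simpl pow. rewrite cpow_mulb; auto. rewrite IHk. simpl. reflexivity.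
    apply pow_lt; auto.
Qed.

Lemma cpow_INR_mul x k s : cpow x (- (RtoC (INR k) * s)) = (cpow x (- s)) ^ k.
Proof.
  induction k.
  - simpl. replace (- (RtoC 0 * s)) with (RtoC 0) by ring. apply cpow_zero.
  - rewrite S_INR, RtoC_plus.
    replace (- ((RtoC (INR k) + RtoC 1) * s)) with (- (RtoC (INR k) * s) + - s) by ring.
    rewrite cpow_add, IHk. simpl. ring.
Qed.

Lemma Cmod_cpow_neg (n : nat) s : (1 <= INR n)%R -> (2 <= Re s)%R ->
  (Cmod (cpow (INR n) (- s)) <= / (INR n * INR n))%R.
Proof.
  intros Hn Hs. rewrite Cmod_cpow.
  assert (Hl : (0 <= ln (INR n))%R). { rewrite <- ln_1. apply ln_le; lra. }
  replace (/ (INR n * INR n))%R with (exp (-2 * ln (INR n)))%R.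
  - apply exp_le. unfold Re in *. simpl. nra.
  - replace (-2 * ln (INR n))%R with (- (ln (INR n) + ln (INR n)))%R by ring.
    rewrite exp_Ropp, exp_plus, exp_ln by lra. reflexivity.
Qed.

End H2.
Import H2.

Module H3.
Local Open Scope C_scope.

Definition primeZ (p : nat) : Prop := prime (Z.of_nat p).

Lemma primeZ_ge2 p : primeZ p -> (2 <= p)%nat.
Proof. intros H. apply prime_ge_2 in H. lia. Qed.

Lemma divide_Z (a b : nat) : Nat.divide a b <-> (Z.of_nat a | Z.of_nat b)%Z.
Proof.
  split.
  - intros [k Hk]. exists (Z.of_nat k). subst. apply Nat2Z.inj_mul.
  - intros [z Hz]. destruct (Nat.eq_dec a 0) as [Ha|Ha].
    + subst. simpl in Hz. rewrite Z.mul_0_r in Hz. exists 0%nat. lia.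
    + assert (Hz0 : (0 <= z)%Z) by nia.
      exists (Z.to_nat z). apply Nat2Z.inj. rewrite Nat2Z.inj_mul, Z2Nat.id; auto.
Qed.

Lemma primeZ_mult p a b : primeZ p -> Nat.divide p (a * b) -> Nat.divide p a \/ Nat.divide p b.
Proof.
  intros Hp H. apply divide_Z in H. rewrite Nat2Z.inj_mul in H.
  destruct (prime_mult _ Hp _ _ H); [left|right]; apply divide_Z; auto.
Qed.

Lemma primeZ_pow p q k : primeZ p -> primeZ q -> Nat.divide p (q ^ k) -> p = q.
Proof.
  intros Hp Hq H. apply divide_Z in H. rewrite Nat2Z.inj_pow in H.
  apply Zpow_facts.prime_power_prime in H; auto; lia.
Qed.

Lemma prime_divisor_exists n : (2 <= n)%nat -> exists p, primeZ p /\ Nat.divide p n.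
Proof.
  induction n as [n IH] using lt_wf_ind. intros Hn.
  destruct (prime_dec (Z.of_nat n)) as [Hp|Hnp].
  - exists n. split; auto. apply Nat.divide_refl.
  - destruct (not_prime_divide (Z.of_nat n) ltac:(lia) Hnp) as [d [Hd1 Hd2]].
    assert (Hd0 : (0 <= d)%Z) by lia.
    destruct (IH (Z.to_nat d) ltac:(lia) ltac:(lia)) as [p [Hp Hpd]].
    exists p. split; auto. eapply Nat.divide_trans; [exact Hpd|].
    apply divide_Z. rewrite Z2Nat.id by lia. exact Hd2.
Qed.

Lemma pow_decomp q n : primeZ q -> (1 <= n)%nat ->
  exists v m, n = (q ^ v * m)%nat /\ ~ Nat.divide q m /\ (1 <= m)%nat.
Proof.
  intros Hq. pose proof (primeZ_ge2 _ Hq).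
  induction n as [n IH] using lt_wf_ind. intros Hn.
  destruct (classic (Nat.divide q n)) as [[k Hk]|Hnd].
  - assert (Hk1 : (1 <= k)%nat) by nia.
    destruct (IH k ltac:(nia) Hk1) as [v [m [E [Hm1 Hm2]]]].
    exists (S v), m. split; auto. rewrite Hk, E. simpl. ring.
  - exists 0%nat, n. simpl. split; [lia|]. auto.
Qed.

Lemma pow_uniq q k j m m' : primeZ q -> ~ Nat.divide q m -> ~ Nat.divide q m' ->
  (q ^ k * m = q ^ j * m')%nat -> k = j /\ m = m'.
Proof.
  intros Hq. pose proof (primeZ_ge2 _ Hq). revert j.
  induction k as [|k IH]; intros j H1 H2 E; destruct j as [|j].
  - simpl in E. lia.
  - exfalso. apply H1. exists (q ^ j * m')%nat. simpl in E. nia.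
  - exfalso. apply H2. exists (q ^ k * m)%nat. simpl in E. nia.
  - simpl in E. assert (E' : (q ^ k * m = q ^ j * m')%nat) by nia.
    destruct (IH j H1 H2 E'). split; auto.
Qed.

End H3.
Import H3.

Module H4.
Local Open Scope C_scope.

Definition lsum (f : nat -> C) (l : list nat) : C := fold_right (fun n acc => f n + acc) 0 l.
Definition rsum (f : nat -> R) (l : list nat) : R := fold_right (fun n acc => f n + acc)%R 0%R l.

Lemma lsum_app f l1 l2 : lsum f (l1 ++ l2) = lsum f l1 + lsum f l2.
Proof. induction l1; simpl. ring. rewrite IHl1. ring. Qed.
Lemma rsum_app f l1 l2 : rsum f (l1 ++ l2) = (rsum f l1 + rsum f l2)%R.
Proof. induction l1; simpl. ring. rewrite IHl1. ring. Qed.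

Lemma lsum_perm f l l' : Permutation l l' -> lsum f l = lsum f l'.
Proof. induction 1; simpl; auto. rewrite IHPermutation; auto. ring. congruence. Qed.
Lemma rsum_perm f l l' : Permutation l l' -> rsum f l = rsum f l'.
Proof. induction 1; simpl; auto. rewrite IHPermutation; auto. ring. congruence. Qed.

Lemma Cmod_lsum f l : (Cmod (lsum f l) <= rsum (fun n => Cmod (f n)) l)%R.
Proof. induction l; simpl. rewrite Cmod_0; lra. eapply Rle_trans; [apply Cmod_triangle|]; lra. Qed.

Lemma rsum_nonneg f l : (forall n, 0 <= f n)%R -> (0 <= rsum f l)%R.
Proof. intros H; induction l; simpl. lra. specialize (H a). lra. Qed.

Lemma lsum_filter f P l : lsum f l = lsum f (filter P l) + lsum f (filter (fun x => negb (P x)) l).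
Proof. induction l; simpl. ring. destruct (P a); simpl; rewrite IHl; ring. Qed.
Lemma rsum_filter f P l : rsum f l = (rsum f (filter P l) + rsum f (filter (fun x => negb (P x)) l))%R.
Proof. induction l; simpl. ring. destruct (P a); simpl; rewrite IHl; ring. Qed.

Lemma rsum_incl f l l' : (forall n, 0 <= f n)%R -> NoDup l -> NoDup l' -> incl l l' ->
  (rsum f l <= rsum f l')%R.
Proof.
  intros Hf Hl Hl' Hi.
  rewrite (rsum_filter f (fun x => if in_dec Nat.eq_dec x l then true else false) l').
  assert (HP : Permutation l (filter (fun x => if in_dec Nat.eq_dec x l then true else false) l')).
  { apply NoDup_Permutation; auto. apply NoDup_filter; auto.
    intros x. rewrite filter_In. split.
    - intros Hx; split; auto. destruct in_dec; tauto.
    - intros [_ H]. destruct in_dec; auto; discriminate. }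
  rewrite <- (rsum_perm _ _ _ HP). pose proof (rsum_nonneg f (filter (fun x => negb (if in_dec Nat.eq_dec x l then true else false)) l') Hf). lra.
Qed.

Lemma lsum_map f h l : lsum f (map h l) = lsum (fun x => f (h x)) l.
Proof. induction l; simpl; auto. rewrite IHl; auto. Qed.
Lemma rsum_map f h l : rsum f (map h l) = rsum (fun x => f (h x)) l.
Proof. induction l; simpl; auto. rewrite IHl; auto. Qed.

Lemma lsum_ext_in f g l : (forall x, In x l -> f x = g x) -> lsum f l = lsum g l.
Proof. induction l; simpl; intros H; auto. rewrite H, IHl; auto. Qed.

Lemma lsum_scal c f l : lsum (fun x => c * f x) l = c * lsum f l.
Proof. induction l; simpl. ring. rewrite IHl. ring. Qed.

Lemma sum_n_lsum (g : nat -> C) N : sum_n g N = lsum g (seq 0 (S N)).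
Proof.
  induction N.
  - rewrite sum_O. simpl. ring.
  - rewrite sum_Sn, IHN, (seq_S (S N) 0), lsum_app. simpl. change plus with Cplus. simpl. ring.
Qed.
Lemma sum_n_rsum (g : nat -> R) N : sum_n g N = rsum g (seq 0 (S N)).
Proof.
  induction N.
  - rewrite sum_O. simpl. ring.
  - rewrite sum_Sn, IHN, (seq_S (S N) 0), rsum_app. simpl. change plus with Rplus. simpl. ring.
Qed.
Lemma sum_n_lsum1 (g : nat -> C) N : sum_n (fun n => g (S n)) N = lsum g (seq 1 (S N)).
Proof. rewrite sum_n_lsum, <- seq_shift, lsum_map. reflexivity. Qed.
Lemma sum_n_rsum1 (g : nat -> R) N : sum_n (fun n => g (S n)) N = rsum g (seq 1 (S N)).
Proof. rewrite sum_n_rsum, <- seq_shift, rsum_map. reflexivity. Qed.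

Lemma lsum_map_prod (f : nat -> C) (h : nat * nat -> nat) l1 l2 :
  lsum f (map h (list_prod l1 l2)) = lsum (fun a => lsum (fun b => f (h (a, b))) l2) l1.
Proof.
  induction l1; simpl; auto. rewrite map_app, lsum_app, IHl1, map_map, lsum_map. reflexivity.
Qed.

Lemma NoDup_list_prod' (l1 l2 : list nat) : NoDup l1 -> NoDup l2 -> NoDup (list_prod l1 l2).
Proof.
  induction 1 as [|a l1 Ha Hl1 IH]; intros H2; simpl. constructor.
  apply NoDup_app.
  - apply FinFun.Injective_map_NoDup; auto. intros x y E. inversion E; auto.
  - auto.
  - intros [x y] Hin Hin'. apply in_map_iff in Hin. destruct Hin as [z [Ez _]]. inversion Ez; subst.
    apply in_prod_iff in Hin'. tauto.
Qed.

Lemma fold_pp (f : nat -> C) a l :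
  fold_right (fun p acc => if prime_dec (Z.of_nat p) then f p * acc else acc) a l =
  fold_right (fun p acc => if prime_dec (Z.of_nat p) then f p * acc else acc) 1 l * a.
Proof. induction l; simpl. ring. rewrite IHl. destruct prime_dec; ring. Qed.

Lemma prime_prod_S f N : prime_prod f (S N) =
  prime_prod f N * (if prime_dec (Z.of_nat (S N)) then f (S N) else 1).
Proof.
  unfold prime_prod. rewrite (seq_S (S N) 0), fold_right_app. simpl (0 + S N)%nat.
  rewrite fold_pp. f_equal. cbn [fold_right]. destruct prime_dec; ring.
Qed.

Lemma prime_prod_0 f : prime_prod f 0 = 1.
Proof.
  unfold prime_prod. simpl. destruct (prime_dec 0) as [H|H].
  - pose proof (prime_ge_2 _ H). lia.
  - reflexivity.
Qed.

Definition smooth (N m : nat) : Prop := forall p, primeZ p -> Nat.divide p m -> (p <= N)%nat.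

Fixpoint Alist (K N : nat) : list nat :=
  match N with
  | O => [1%nat]
  | S N' => if prime_dec (Z.of_nat (S N')) then
      map (fun km => (S N' ^ fst km * snd km)%nat) (list_prod (seq 0 (S K)) (Alist K N'))
    else Alist K N'
  end.

Lemma A_elem K N m : In m (Alist K N) -> (1 <= m)%nat /\ smooth N m.
Proof.
  revert m. induction N; intros m Hm; cbn [Alist] in Hm.
  - destruct Hm as [<-|[]]. split; auto. intros p Hp Hd.
    apply Nat.divide_1_r in Hd. apply primeZ_ge2 in Hp. lia.
  - destruct prime_dec as [Hq|Hq].
    + apply in_map_iff in Hm. destruct Hm as [[k m0] [E Hin]]. simpl in E. subst m.
      apply in_prod_iff in Hin. destruct Hin as [_ Hin]. destruct (IHN m0 Hin) as [H1 H2].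
      split.
      * pose proof (Nat.pow_nonzero (S N) k ltac:(lia)). nia.
      * intros p Hp Hd. destruct (primeZ_mult _ _ _ Hp Hd) as [Hd'|Hd'].
        -- rewrite (primeZ_pow p (S N) k Hp Hq Hd'). lia.
        -- specialize (H2 p Hp Hd'). lia.
    + destruct (IHN m Hm) as [H1 H2]. split; auto. intros p Hp Hd. specialize (H2 p Hp Hd). lia.
Qed.

Lemma A_nodup K N : NoDup (Alist K N).
Proof.
  induction N; cbn [Alist].
  - constructor. intros []. constructor.
  - destruct prime_dec as [Hq|Hq]; auto.
    apply NoDup_map_NoDup_ForallPairs.
    + intros [k m] [j m'] H1 H2 E. simpl in E.
      apply in_prod_iff in H1. apply in_prod_iff in H2.
      destruct (A_elem K N m (proj2 H1)) as [_ Hs1].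
      destruct (A_elem K N m' (proj2 H2)) as [_ Hs2].
      assert (Hn1 : ~ Nat.divide (S N) m) by (intros D; specialize (Hs1 _ Hq D); lia).
      assert (Hn2 : ~ Nat.divide (S N) m') by (intros D; specialize (Hs2 _ Hq D); lia).
      destruct (pow_uniq (S N) k j m m' Hq Hn1 Hn2 E). subst; auto.
    + apply NoDup_list_prod'; auto. apply seq_NoDup.
Qed.

Lemma A_contains K N n : (1 <= n)%nat -> (n <= S K)%nat -> smooth N n -> In n (Alist K N).
Proof.
  revert n. induction N; intros n H1 H2 Hs; cbn [Alist].
  - destruct (Nat.eq_dec n 1) as [->|Hne]; [left; auto|].
    destruct (prime_divisor_exists n ltac:(lia)) as [p [Hp Hd]].
    specialize (Hs p Hp Hd). apply primeZ_ge2 in Hp. lia.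
  - destruct prime_dec as [Hq|Hq].
    + destruct (pow_decomp (S N) n Hq H1) as [v [m [E [Hm1 Hm2]]]].
      apply in_map_iff. exists (v, m). split; [simpl; auto|].
      apply in_prod_iff. split.
      * apply in_seq. pose proof (Nat.pow_gt_lin_r (S N) v ltac:(apply primeZ_ge2 in Hq; lia)). nia.
      * pose proof (Nat.pow_nonzero (S N) v ltac:(lia)).
        apply IHN; [auto|nia|].
        intros p Hp Hd. assert (Hdn : Nat.divide p n) by (rewrite E; apply Nat.divide_mul_r; auto).
        specialize (Hs p Hp Hdn). destruct (Nat.eq_dec p (S N)) as [->|]; [contradiction|lia].
    + apply IHN; auto. intros p Hp Hd. specialize (Hs p Hp Hd).
      destruct (Nat.eq_dec p (S N)) as [->|]; [contradiction|lia].
Qed.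

Lemma A_prod (F : nat -> C) K N : F 1%nat = 1 ->
  (forall q k m, primeZ q -> ~ Nat.divide q m -> (1 <= m)%nat -> F (q ^ k * m)%nat = F (q ^ k)%nat * F m) ->
  prime_prod (fun p => sum_n (fun k => F (p ^ k)%nat) K) N = lsum F (Alist K N).
Proof.
  intros HF1 Hmul. induction N.
  - rewrite prime_prod_0. simpl. rewrite HF1. ring.
  - rewrite prime_prod_S, IHN. cbn [Alist]. destruct prime_dec as [Hq|Hq]; [|ring].
    rewrite lsum_map_prod, sum_n_lsum.
    assert (Hr : forall c (f : nat -> C) l, lsum (fun x => f x * c) l = lsum f l * c).
    { intros c f l; induction l; simpl; [ring|]. rewrite IHl. ring. }
    transitivity (lsum (fun a => F (S N ^ a)%nat * lsum F (Alist K N)) (seq 0 (S K))).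
    + rewrite Hr. ring.
    + apply lsum_ext_in. intros k _. simpl. rewrite <- lsum_scal. apply lsum_ext_in. intros m Hm.
      destruct (A_elem K N m Hm) as [Hm1 Hs].
      symmetry. apply Hmul; auto. intros D. specialize (Hs _ Hq D). lia.
Qed.

End H4.
Import H4.

Module H5.
Local Open Scope C_scope.

Lemma Rseries_eps (a : nat -> R) l : is_series a l ->
  forall eps, (0 < eps)%R -> exists N, forall n, (N <= n)%nat -> (Rabs (sum_n a n - l) < eps)%R.
Proof.
  intros H eps He. destruct (proj1 (filterlim_locally (sum_n a) l) H (mkposreal _ He)) as [N HN].
  exists N. intros n Hn. exact (HN n Hn).
Qed.

Lemma rsum_seq_split f a m1 m2 : rsum f (seq a (m1 + m2)) = (rsum f (seq a m1) + rsum f (seq (a + m1) m2))%R.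
Proof. rewrite seq_app, rsum_app. reflexivity. Qed.
Lemma lsum_seq_split f a m1 m2 : lsum f (seq a (m1 + m2)) = lsum f (seq a m1) + lsum f (seq (a + m1) m2).
Proof. rewrite seq_app, lsum_app. reflexivity. Qed.

Lemma in_le_list_max x l : In x l -> (x <= list_max l)%nat.
Proof. induction l; simpl; intros H; [contradiction|]. destruct H as [<-|H]; [lia|]. specialize (IHl H). lia. Qed.

Theorem euler_product (F : nat -> C) (g : R) (SF : C) (Lf : nat -> C) :
  F 1%nat = 1 ->
  (forall q k m, primeZ q -> ~ Nat.divide q m -> (1 <= m)%nat -> F (q ^ k * m)%nat = F (q ^ k)%nat * F m) ->
  is_series (fun n => Cmod (F (S n))) g ->
  is_series (fun n => F (S n)) SF ->
  (forall p, primeZ p -> is_series (fun k => F (p ^ k)%nat) (Lf p)) ->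
  filterlim (prime_prod Lf) eventually (locally SF).
Proof.
  intros HF1 Hmul Hg HSF HLf.
  set (G := fun n => Cmod (F n)).
  set (PG := fun N => rsum G (seq 1 N)).
  assert (HG0 : forall n, (0 <= G n)%R) by (intros; apply Cmod_ge_0).
  assert (Hmono : forall N m, (PG N + rsum G (seq (S N) m) = PG (N + m)%nat)%R).
  { intros N m. unfold PG. rewrite rsum_seq_split. reflexivity. }
  assert (P1 : forall N, (PG N <= g)%R).
  { intros N. destruct (Rle_lt_dec (PG N) g) as [?|Hlt]; auto. exfalso.
    destruct (Rseries_eps _ _ Hg (PG N - g)%R ltac:(lra)) as [J HJ].
    specialize (HJ (max J N) ltac:(lia)).
    change (sum_n (fun n => G (S n)) (max J N)) with (sum_n (fun n => G (S n)) (max J N)) in HJ.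
    rewrite (sum_n_rsum1 G) in HJ.
    replace (S (max J N)) with (N + (S (max J N) - N))%nat in HJ by lia.
    fold (PG (N + (S (max J N) - N))%nat) in HJ. rewrite <- Hmono in HJ.
    pose proof (rsum_nonneg G (seq (S N) (S (max J N) - N)) HG0).
    apply Rabs_def2 in HJ. lra. }
  assert (P2 : forall N, (Cmod (SF - lsum F (seq 1 N)) <= g - PG N)%R).
  { intros N. apply (Ccv_le (sum_n (fun n => F (S n)))); [apply is_series_Ccv; auto|].
    exists N. intros j Hj. rewrite sum_n_lsum1.
    replace (S j) with (N + (S j - N))%nat by lia. rewrite lsum_seq_split.
    replace (lsum F (seq 1 N) + lsum F (seq (1 + N) (S j - N)) - lsum F (seq 1 N))
      with (lsum F (seq (1 + N) (S j - N))) by ring.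
    eapply Rle_trans; [apply Cmod_lsum|]. fold G.
    pose proof (P1 (N + (S j - N))%nat). rewrite <- Hmono in H. simpl (1 + N)%nat. lra. }
  assert (P3 : forall N K, (N <= K)%nat ->
     (Cmod (lsum F (Alist K N) - lsum F (seq 1 N)) <= g - PG N)%R).
  { intros N K HNK. set (A := Alist K N).
    rewrite (lsum_filter F (fun x => Nat.leb x N) A).
    assert (HP : Permutation (filter (fun x => Nat.leb x N) A) (seq 1 N)).
    { apply NoDup_Permutation. apply NoDup_filter, A_nodup. apply seq_NoDup.
      intros x. rewrite filter_In, in_seq, Nat.leb_le. split.
      - intros [Hx Hle]. destruct (A_elem K N x Hx). lia.
      - intros Hx. split; [|lia]. apply A_contains; try lia.
        intros p Hp Hd. apply Nat.divide_pos_le in Hd; lia. }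
    rewrite (lsum_perm _ _ _ HP).
    replace (lsum F (seq 1 N) + lsum F (filter (fun x => negb (Nat.leb x N)) A) - lsum F (seq 1 N))
      with (lsum F (filter (fun x => negb (Nat.leb x N)) A)) by ring.
    eapply Rle_trans; [apply Cmod_lsum|]. fold G.
    set (M := list_max A).
    eapply Rle_trans.
    - apply (rsum_incl G _ (seq (S N) (M - N))); auto.
      + apply NoDup_filter, A_nodup.
      + apply seq_NoDup.
      + intros x Hx. apply filter_In in Hx. destruct Hx as [Hx Hle].
        apply Bool.negb_true_iff, Nat.leb_gt in Hle. apply in_seq.
        pose proof (in_le_list_max x A Hx). fold M in H. lia.
    - pose proof (P1 (N + (M - N))%nat). rewrite <- Hmono in H. lra. }
  assert (P4 : forall N, Ccv (fun K => prime_prod (fun p => sum_n (fun k => F (p ^ k)%nat) K) N) (prime_prod Lf N)).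
  { induction N.
    - rewrite prime_prod_0.
      replace (fun K => prime_prod (fun p => sum_n (fun k => F (p ^ k)%nat) K) 0) with (fun _ : nat => RtoC 1).
      + apply Ccv_const.
      + apply functional_extensionality. intros K. rewrite prime_prod_0. reflexivity.
    - rewrite prime_prod_S.
      replace (fun K => prime_prod (fun p => sum_n (fun k => F (p ^ k)%nat) K) (S N)) with
        (fun K => prime_prod (fun p => sum_n (fun k => F (p ^ k)%nat) K) N *
           (if prime_dec (Z.of_nat (S N)) then sum_n (fun k => F (S N ^ k)%nat) K else 1)).
      + apply Ccv_mult; auto. destruct prime_dec as [Hq|Hq].
        * apply is_series_Ccv. apply HLf. exact Hq.
        * apply Ccv_const.
      + apply functional_extensionality. intros K. rewrite prime_prod_S. reflexivity. }
  assert (P5 : forall N, (Cmod (prime_prod Lf N - SF) <= 2 * (g - PG N))%R).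
  { intros N. apply (Ccv_le _ _ _ _ (P4 N)). exists N. intros K HK.
    rewrite A_prod; auto.
    replace (lsum F (Alist K N) - SF) with ((lsum F (Alist K N) - lsum F (seq 1 N)) + - (SF - lsum F (seq 1 N))) by ring.
    eapply Rle_trans; [apply Cmod_triangle|]. rewrite Cmod_opp.
    pose proof (P2 N). pose proof (P3 N K HK). lra. }
  apply Ccv_filterlim. intros eps He.
  destruct (Rseries_eps _ _ Hg (eps/3)%R ltac:(lra)) as [J HJ].
  exists (S J). intros N HN. specialize (HJ (N - 1)%nat ltac:(lia)).
  change (sum_n (fun n => G (S n)) (N - 1)) with (sum_n (fun n => G (S n)) (N - 1)) in HJ.
  rewrite (sum_n_rsum1 G) in HJ. replace (S (N - 1)) with N in HJ by lia.
  fold (PG N) in HJ. apply Rabs_def2 in HJ. pose proof (P5 N). lra.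
Qed.

End H5.
Import H5.

Module H6.

Lemma INJ (a b : nat) (f : nat -> nat) :
  (forall i, (i < a)%nat -> (f i < b)%nat) ->
  (forall i j, (i < a)%nat -> (j < a)%nat -> f i = f j -> i = j) -> (a <= b)%nat.
Proof.
  intros H1 H2.
  assert (Hnd : NoDup (map f (seq 0 a))).
  { apply NoDup_map_NoDup_ForallPairs; [|apply seq_NoDup].
    intros i j Hi Hj. apply in_seq in Hi, Hj. apply H2; lia. }
  assert (Hinc : incl (map f (seq 0 a)) (seq 0 b)).
  { intros y Hy. apply in_map_iff in Hy. destruct Hy as [i [<- Hi]]. apply in_seq in Hi.
    apply in_seq. specialize (H1 i ltac:(lia)). lia. }
  pose proof (NoDup_incl_length Hnd Hinc). rewrite length_map, !length_seq in H. exact H.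
Qed.

Lemma choice_nat (P : nat -> nat -> Prop) : (forall i, exists j, P i j) -> exists f, forall i, P i (f i).
Proof.
  intros H. exists (fun i => proj1_sig (constructive_indefinite_description _ (H i))).
  intros i. exact (proj2_sig (constructive_indefinite_description _ (H i))).
Qed.

Lemma choice_gen {A B : Type} (P : A -> B -> Prop) : (forall i, exists j, P i j) -> exists f, forall i, P i (f i).
Proof.
  intros H. exists (fun i => proj1_sig (constructive_indefinite_description _ (H i))).
  intros i. exact (proj2_sig (constructive_indefinite_description _ (H i))).
Qed.

Lemma counts_unique_le (P : (Rt3 -> Prop) -> Prop) k k' : counts P k -> counts P k' -> (k <= k')%nat.
Proof.
  intros [L [HL [HP [Hd Hc]]]] [L' [HL' [HP' [Hd' Hc']]]].
  assert (Hex : forall i, exists j, (i < k)%nat -> (j < k')%nat /\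
     set_equiv (nth i L (fun _ => False)) (nth j L' (fun _ => False))).
  { intros i. destruct (Nat.lt_ge_cases i k) as [Hi|Hi].
    - assert (Hin : In (nth i L (fun _ => False)) L) by (apply nth_In; lia).
      destruct (Hc' _ (HP _ Hin)) as [T [HT HeT]].
      destruct (In_nth L' T (fun _ => False) HT) as [j [Hj Ej]].
      exists j. intros _. split; [lia|]. rewrite Ej. exact HeT.
    - exists O. intros; lia. }
  destruct (choice_nat _ Hex) as [f Hf].
  apply (INJ k k' f).
  - intros i Hi. apply (Hf i Hi).
  - intros i j Hi Hj E. apply Hd; auto.
    destruct (Hf i Hi) as [_ E1]. destruct (Hf j Hj) as [_ E2]. rewrite E in E1.
    intros x. rewrite (E1 x), (E2 x). tauto.
Qed.

Lemma counts_unique P k k' : counts P k -> counts P k' -> k = k'.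
Proof. intros H1 H2. pose proof (counts_unique_le P k k' H1 H2). pose proof (counts_unique_le P k' k H2 H1). lia. Qed.

Lemma a_cyclic_eq n k : counts (cocyclic_subring_of_index n) k -> a_cyclic n = k.
Proof.
  intros H. unfold a_cyclic. destruct excluded_middle_informative as [H'|H'].
  - destruct (constructive_indefinite_description _ H') as [k' Hk']. simpl.
    apply (counts_unique _ _ _ Hk' H).
  - exfalso. apply H'. exists k. exact H.
Qed.

Definition Sx (n : nat) (x : Z) : Rt3 -> Prop :=
  fun r => let '(a, b, c) := r in (Z.of_nat n | b + c * x)%Z.

Ltac rt3_eq := apply pair_equal_spec; split; [apply pair_equal_spec; split|]; ring.

Lemma Sx_subgroup n x : is_add_subgroup (Sx n x).
Proof.
  split; [|split].
  - simpl. exists 0%Z. ring.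
  - intros [[a b] c] [[a' b'] c'] H1 H2. simpl in *.
    replace (b + b' + (c + c') * x)%Z with ((b + c * x) + (b' + c' * x))%Z by ring.
    apply Z.divide_add_r; auto.
  - intros [[a b] c] H1. simpl in *.
    replace (- b + - c * x)%Z with (- (b + c * x))%Z by ring. apply Z.divide_opp_r; auto.
Qed.

Lemma Sx_rep n i : (i < n)%nat -> nth i (map (fun j => (0%Z, Z.of_nat j, 0%Z)) (seq 0 n)) rzero = (0%Z, Z.of_nat i, 0%Z).
Proof.
  intros Hi. change rzero with ((fun j => (0%Z, Z.of_nat j, 0%Z)) 0%nat).
  rewrite map_nth, seq_nth by auto. reflexivity.
Qed.

Lemma Sx_index n x : (0 < n)%nat -> has_index (Sx n x) n.
Proof.
  intros Hn. exists (map (fun j => (0%Z, Z.of_nat j, 0%Z)) (seq 0 n)). split; [|split].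
  - rewrite length_map, length_seq. reflexivity.
  - intros i j Hi Hj H. rewrite !Sx_rep in H by auto. simpl in H.
    replace (Z.of_nat i + - Z.of_nat j + (0 + - 0) * x)%Z with (Z.of_nat i - Z.of_nat j)%Z in H by ring.
    destruct H as [q Hq]. assert (q = 0%Z) by nia. subst. lia.
  - intros [[a b] c]. set (r := ((b + c * x) mod Z.of_nat n)%Z).
    assert (Hr : (0 <= r < Z.of_nat n)%Z) by (apply Z.mod_pos_bound; lia).
    exists (Z.to_nat r). split; [lia|]. rewrite Sx_rep by lia. unfold congr; simpl.
    rewrite Z2Nat.id by lia. unfold r. rewrite Z.mod_eq by lia.
    exists ((b + c * x) / Z.of_nat n)%Z. ring.
Qed.

Lemma Sx_cocyclic n x : cocyclic (Sx n x).
Proof.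
  exists (0%Z, 1%Z, 0%Z). intros [[a b] c]. exists (b + c * x)%Z. unfold congr; simpl.
  exists 0%Z. ring.
Qed.

Lemma Sx_mul n x : (Z.of_nat n | x ^ 3)%Z -> forall r s, Sx n x r -> Sx n x s -> Sx n x (rmul r s).
Proof.
  intros [g Hg] [[a b] c] [[a' b'] c'] [al Hal] [be Hbe]. cbn [Sx rmul] in *.
  set (N := Z.of_nat n) in *.
  exists (a * be + a' * al + al * be * N * x - al * c' * x * x - be * c * x * x + c * c' * g)%Z.
  assert (Hb : b = (al * N - c * x)%Z) by lia.
  assert (Hb' : b' = (be * N - c' * x)%Z) by lia.
  assert (Hx3 : (x * x * x = g * N)%Z) by (rewrite <- Hg; ring).
  rewrite Hb, Hb'.
  replace ((a * (be * N - c' * x) + (al * N - c * x) * a' +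
   (a * c' + (al * N - c * x) * (be * N - c' * x) + c * a') * x))%Z with
   (a * be * N + a' * al * N + al * be * N * N * x - al * c' * x * x * N - be * c * x * x * N + c * c' * (x * x * x))%Z by ring.
  rewrite Hx3. ring.
Qed.

Lemma Sx_subring n x : (0 < n)%nat -> (Z.of_nat n | x ^ 3)%Z -> cocyclic_subring_of_index n (Sx n x).
Proof.
  intros Hn H3. split; [|split].
  - split; [apply Sx_subgroup|split; [|split]].
    + exists n. apply Sx_index; auto.
    + simpl. exists 0%Z. ring.
    + apply Sx_mul; auto.
  - apply Sx_cocyclic.
  - apply Sx_index; auto.
Qed.

Lemma Sx_inj n x y : (0 <= x < Z.of_nat n)%Z -> (0 <= y < Z.of_nat n)%Z ->
  set_equiv (Sx n x) (Sx n y) -> x = y.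
Proof.
  intros Hx Hy H. assert (Hm : Sx n x (0%Z, (- x)%Z, 1%Z)) by (unfold Sx; exists 0%Z; ring).
  apply H in Hm. unfold Sx in Hm. destruct Hm as [q Hq]. assert (q = 0%Z) by nia. subst. lia.
Qed.

End H6.
Import H6.

Module H7.
Local Open Scope Z_scope.

Lemma S_eq (S : Rt3 -> Prop) x y : S x -> x = y -> S y.
Proof. intros H <-; auto. Qed.

Lemma S_scale_nat S : is_add_subgroup S -> forall y, S y -> forall m : nat, S (rscale (Z.of_nat m) y).
Proof.
  intros [H0 [Hadd Hopp]] [[a b] c] Hy m. induction m.
  - eapply S_eq; [exact H0|]. unfold rzero, rscale. rt3_eq.
  - eapply S_eq; [exact (Hadd _ _ IHm Hy)|]. unfold radd, rscale. rewrite Nat2Z.inj_succ. rt3_eq.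
Qed.

Lemma S_scale S : is_add_subgroup S -> forall y, S y -> forall k, S (rscale k y).
Proof.
  intros HS y Hy k. destruct (Z.le_gt_cases 0 k) as [Hk|Hk].
  - replace k with (Z.of_nat (Z.to_nat k)) by (apply Z2Nat.id; auto). apply S_scale_nat; auto.
  - destruct HS as [H0 [Hadd Hopp]].
    pose proof (S_scale_nat S (conj H0 (conj Hadd Hopp)) y Hy (Z.to_nat (- k))) as H.
    eapply S_eq; [exact (Hopp _ H)|]. destruct y as [[a b] c]. unfold ropp, rscale.
    rewrite Z2Nat.id by lia. rt3_eq.
Qed.

Lemma congr_trans S : is_add_subgroup S -> forall x y z, congr S x y -> congr S z y -> congr S x z.
Proof.
  intros [H0 [Hadd Hopp]] [[a b] c] [[a' b'] c'] [[a'' b''] c''] H1 H2. unfold congr in *.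
  eapply S_eq; [exact (Hadd _ _ H1 (Hopp _ H2))|]. unfold radd, ropp. rt3_eq.
Qed.

Lemma congr_mod S : is_add_subgroup S -> forall x g k m, m <> 0 ->
  congr S x (rscale k g) -> S (rscale m g) -> congr S x (rscale (k mod m) g).
Proof.
  intros HS x g k m Hm H1 H2. pose proof (S_scale S HS _ H2 (k / m)) as H3.
  destruct HS as [H0 [Hadd Hopp]]. unfold congr in *.
  eapply S_eq; [exact (Hadd _ _ H1 H3)|].
  pose proof (Z.div_mod k m Hm) as Hk. set (q := k / m) in *. set (r := k mod m) in *.
  rewrite Hk. destruct x as [[a b] c], g as [[g0 g1] g2]. unfold radd, ropp, rscale. rt3_eq.
Qed.

Lemma classify n S : cocyclic_subring_of_index n S ->
  (0 < n)%nat /\ exists x, 0 <= x < Z.of_nat n /\ (Z.of_nat n | x ^ 3) /\ set_equiv S (Sx n x).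
Proof.
  intros [[HS [_ [H1 Hmul]]] [[g Hg] [reps [Hlen [Hdist Hcov]]]]].
  assert (Hn : (0 < n)%nat) by (destruct (Hcov rzero) as [i [Hi _]]; lia).
  split; auto.
  destruct (choice_gen _ Hg) as [kf Hkf].
  pose proof HS as HS'. destruct HS' as [H0 [Hadd Hopp]].
  assert (C1 : forall m : nat, (0 < m)%nat -> S (rscale (Z.of_nat m) g) -> (n <= m)%nat).
  { intros m Hm Hsm.
    apply (INJ n m (fun i => Z.to_nat (kf (nth i reps rzero) mod Z.of_nat m))).
    - intros i Hi. pose proof (Z.mod_pos_bound (kf (nth i reps rzero)) (Z.of_nat m) ltac:(lia)). lia.
    - intros i j Hi Hj E.
      pose proof (Z.mod_pos_bound (kf (nth i reps rzero)) (Z.of_nat m) ltac:(lia)).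
      pose proof (Z.mod_pos_bound (kf (nth j reps rzero)) (Z.of_nat m) ltac:(lia)).
      assert (E' : kf (nth i reps rzero) mod Z.of_nat m = kf (nth j reps rzero) mod Z.of_nat m) by lia.
      apply Hdist; auto.
      pose proof (congr_mod S HS _ _ _ (Z.of_nat m) ltac:(lia) (Hkf (nth i reps rzero)) Hsm) as A1.
      pose proof (congr_mod S HS _ _ _ (Z.of_nat m) ltac:(lia) (Hkf (nth j reps rzero)) Hsm) as A2.
      rewrite E' in A1. exact (congr_trans S HS _ _ _ A1 A2). }
  assert (C2 : S (rscale (Z.of_nat n) g)).
  { assert (Hex : forall i, exists j, (j < n)%nat /\ congr S (rscale (Z.of_nat i) g) (nth j reps rzero)).
    { intros i. destruct (Hcov (rscale (Z.of_nat i) g)) as [j [Hj Hc]]. exists j. auto. }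
    destruct (choice_nat _ Hex) as [jf Hjf].
    destruct (classic (exists i j, (i < j)%nat /\ (j <= n)%nat /\ jf i = jf j)) as [[i [j [Hij [Hjn E]]]]|Hno].
    - destruct (Hjf i) as [_ Ci]. destruct (Hjf j) as [_ Cj]. rewrite E in Ci.
      pose proof (congr_trans S HS _ _ _ Cj Ci) as Cji. unfold congr in Cji.
      assert (Hs : S (rscale (Z.of_nat (j - i)) g)).
      { eapply S_eq; [exact Cji|]. rewrite Nat2Z.inj_sub by lia.
        destruct g as [[g0 g1] g2]. unfold radd, ropp, rscale. rt3_eq. }
      pose proof (C1 (j - i)%nat ltac:(lia) Hs). replace n with (j - i)%nat by lia. exact Hs.
    - exfalso. assert (HH : (n + 1 <= n)%nat).
      { apply (INJ (n + 1) n jf).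
        - intros i _. apply (Hjf i).
        - intros i j Hi Hj E. destruct (Nat.lt_total i j) as [Hlt|[Heq|Hgt]]; auto.
          + exfalso. apply Hno. exists i, j. split; [auto|split; [lia|auto]].
          + exfalso. apply Hno. exists j, i. split; [auto|split; [lia|auto]]. }
      lia. }
  assert (ORD : forall m, S (rscale m g) -> (Z.of_nat n | m)).
  { intros m Hm. pose proof (S_scale S HS _ C2 (m / Z.of_nat n)) as Hq.
    assert (Hr : S (rscale (m mod Z.of_nat n) g)).
    { eapply S_eq; [exact (Hadd _ _ Hm (Hopp _ Hq))|].
      pose proof (Z.div_mod m (Z.of_nat n) ltac:(lia)) as Hk.
      set (q := m / Z.of_nat n) in *. set (r := m mod Z.of_nat n) in *.
      rewrite Hk. destruct g as [[g0 g1] g2]. unfold radd, ropp, rscale. rt3_eq. }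
    pose proof (Z.mod_pos_bound m (Z.of_nat n) ltac:(lia)) as Hb.
    destruct (Z.eq_dec (m mod Z.of_nat n) 0) as [Hz|Hz].
    - apply Z.mod_divide; lia.
    - exfalso. assert (Hr' : S (rscale (Z.of_nat (Z.to_nat (m mod Z.of_nat n))) g)) by (rewrite Z2Nat.id by lia; exact Hr).
      pose proof (C1 (Z.to_nat (m mod Z.of_nat n)) ltac:(lia) Hr'). lia. }
  assert (ORD' : forall m, (Z.of_nat n | m) -> S (rscale m g)).
  { intros m [q Hq]. eapply S_eq; [exact (S_scale S HS _ C2 q)|]. subst m.
    destruct g as [[g0 g1] g2]. unfold rscale. rt3_eq. }
  set (u := kf (0, 1, 0)). set (v := kf (0, 0, 1)). set (w := kf rone).
  assert (Hu := Hkf (0, 1, 0)). assert (Hv := Hkf (0, 0, 1)). assert (Hw := Hkf rone).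
  fold u in Hu. fold v in Hv. fold w in Hw.
  assert (Hnw : (Z.of_nat n | w)).
  { apply ORD. unfold congr in Hw. eapply S_eq; [exact (Hadd _ _ H1 (Hopp _ Hw))|].
    destruct g as [[g0 g1] g2]. unfold radd, ropp, rscale, rone. rt3_eq. }
  assert (KEY : forall a b c, congr S (a, b, c) (rscale (a * w + b * u + c * v) g)).
  { intros a b c. unfold congr in *.
    pose proof (S_scale S HS _ Hw a) as A. pose proof (S_scale S HS _ Hu b) as B.
    pose proof (S_scale S HS _ Hv c) as Cc.
    eapply S_eq; [exact (Hadd _ _ A (Hadd _ _ B Cc))|].
    destruct g as [[g0 g1] g2]. unfold radd, ropp, rscale, rone. rt3_eq. }
  assert (CHAR : forall a b c, S (a, b, c) <-> (Z.of_nat n | b * u + c * v)).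
  { intros a b c. split.
    - intros Hs. assert (HK : S (rscale (a * w + b * u + c * v) g)).
      { pose proof (KEY a b c) as K. unfold congr in K.
        eapply S_eq; [exact (Hadd _ _ Hs (Hopp _ K))|].
        destruct g as [[g0 g1] g2]. unfold radd, ropp, rscale. rt3_eq. }
      apply ORD in HK. replace (b * u + c * v) with ((a * w + b * u + c * v) - a * w) by ring.
      apply Z.divide_sub_r; auto. apply Z.divide_mul_r; auto.
    - intros Hd. assert (HK : S (rscale (a * w + b * u + c * v) g)).
      { apply ORD'. replace (a * w + b * u + c * v) with (a * w + (b * u + c * v)) by ring.
        apply Z.divide_add_r; auto. apply Z.divide_mul_r; auto. }
      pose proof (KEY a b c) as K. unfold congr in K.
      eapply S_eq; [exact (Hadd _ _ K HK)|].
      destruct g as [[g0 g1] g2]. unfold radd, ropp, rscale. rt3_eq. }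
  destruct g as [[g0 g1] g2] eqn:Eg.
  assert (HG : (Z.of_nat n | g1 * u + g2 * v - 1)).
  { pose proof (KEY g0 g1 g2) as K. unfold congr in K.
    assert (HK : S (rscale (1 - (g0 * w + g1 * u + g2 * v)) (g0, g1, g2))).
    { eapply S_eq; [exact K|]. unfold radd, ropp, rscale. rt3_eq. }
    apply ORD in HK.
    replace (g1 * u + g2 * v - 1) with (- (1 - (g0 * w + g1 * u + g2 * v)) - g0 * w) by ring.
    apply Z.divide_sub_r; [apply Z.divide_opp_r; auto|]. apply Z.divide_mul_r; auto. }
  assert (HV3 : (Z.of_nat n | v * v * v)).
  { assert (He : S (0, v, - u)) by (apply CHAR; replace (v * u + - u * v) with 0 by ring; apply Z.divide_0_r).
    pose proof (Hmul _ _ He He) as Hee.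
    assert (Hee' : S (0, 0, v * v)) by (eapply S_eq; [exact Hee|]; unfold rmul; rt3_eq).
    apply CHAR in Hee'. replace (v * v * v) with (0 * u + v * v * v) by ring. exact Hee'. }
  set (u' := 3 * g1 - 3 * g1 * g1 * u + g1 * g1 * g1 * u * u).
  assert (HU : (Z.of_nat n | 1 - u * u')).
  { set (e := g1 * u + g2 * v - 1) in *.
    replace (1 - u * u') with (g2 * g2 * g2 * (v * v * v) - e * (3 * g2 * g2 * v * v - 3 * g2 * v * e + e * e))
      by (unfold u', e; ring).
    apply Z.divide_sub_r; [apply Z.divide_mul_r; auto|apply Z.divide_mul_l; auto]. }
  set (x := (v * u') mod Z.of_nat n).
  assert (Hxb : 0 <= x < Z.of_nat n) by (apply Z.mod_pos_bound; lia).
  assert (HX : (Z.of_nat n | x - v * u')).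
  { exists (- ((v * u') / Z.of_nat n)). unfold x. rewrite Z.mod_eq by lia. ring. }
  exists x. split; [auto|split].
  - set (d := x - v * u') in *.
    replace (x ^ 3) with (v * v * v * (u' * u' * u') + d * (3 * v * v * u' * u' + 3 * v * u' * d + d * d))
      by (unfold d; ring).
    apply Z.divide_add_r; [apply Z.divide_mul_l; auto|apply Z.divide_mul_l; auto].
  - intros [[a b] c]. rewrite CHAR. unfold Sx. split.
    + intros Hd.
      replace (b + c * x) with (u' * (b * u + c * v) + b * (1 - u * u') + c * (x - v * u')) by ring.
      apply Z.divide_add_r; [apply Z.divide_add_r|]; apply Z.divide_mul_r; auto.
    + intros Hd.
      replace (b * u + c * v) with (u * (b + c * x) - c * u * (x - v * u') + c * v * (1 - u * u')) by ring.
      apply Z.divide_add_r; [apply Z.divide_sub_r|]; apply Z.divide_mul_r; auto.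
Qed.

End H7.
Import H7.

Module H8.

Definition xs (n : nat) : list nat := filter (fun x => Nat.eqb ((x * x * x) mod n) 0) (seq 0 n).
Definition cntS (n : nat) : nat := length (xs n).

Lemma xs_spec n x : (0 < n)%nat -> In x (xs n) <-> (x < n)%nat /\ (Z.of_nat n | Z.of_nat x ^ 3)%Z.
Proof.
  intros Hn. unfold xs. rewrite filter_In, in_seq, Nat.eqb_eq, Nat.Lcm0.mod_divide.
  rewrite divide_Z. replace (Z.of_nat x ^ 3)%Z with (Z.of_nat (x * x * x)) by (rewrite !Nat2Z.inj_mul; ring).
  split; intros [H1 H2]; split; auto; lia.
Qed.

Lemma counts_Sx n : (0 < n)%nat -> counts (cocyclic_subring_of_index n) (cntS n).
Proof.
  intros Hn. exists (map (fun x => Sx n (Z.of_nat x)) (xs n)). split; [|split; [|split]].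
  - rewrite length_map. reflexivity.
  - intros S HS. apply in_map_iff in HS. destruct HS as [x [<- Hx]].
    apply xs_spec in Hx; auto. apply Sx_subring; tauto.
  - intros i j Hi Hj E. unfold cntS in Hi, Hj.
    rewrite (nth_indep _ _ (Sx n (Z.of_nat 0))) in E by (rewrite length_map; auto).
    rewrite (nth_indep _ (fun _ => False) (Sx n (Z.of_nat 0))) in E by (rewrite length_map; auto).
    rewrite (map_nth (fun x => Sx n (Z.of_nat x)) (xs n) 0%nat i), (map_nth (fun x => Sx n (Z.of_nat x)) (xs n) 0%nat j) in E.
    assert (Hxi : In (nth i (xs n) 0%nat) (xs n)) by (apply nth_In; auto).
    assert (Hxj : In (nth j (xs n) 0%nat) (xs n)) by (apply nth_In; auto).
    apply xs_spec in Hxi; auto. apply xs_spec in Hxj; auto.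
    apply Sx_inj in E; try lia.
    assert (Hnd : NoDup (xs n)) by (apply NoDup_filter, seq_NoDup).
    apply (proj1 (NoDup_nth (xs n) 0%nat) Hnd i j Hi Hj). lia.
  - intros S HS. destruct (classify n S HS) as [_ [x [Hxb [Hx3 He]]]].
    exists (Sx n x). split; auto. apply in_map_iff. exists (Z.to_nat x). split.
    + rewrite Z2Nat.id by lia. reflexivity.
    + apply xs_spec; auto. rewrite Z2Nat.id by lia. split; [lia|auto].
Qed.

Lemma a_cyclic_cntS n : (0 < n)%nat -> a_cyclic n = cntS n.
Proof. intros Hn. apply a_cyclic_eq. apply counts_Sx; auto. Qed.

End H8.
Import H8.

Module H9.

Lemma mod3 a x : ((x * x * x) mod a = ((x mod a) * (x mod a) * (x mod a)) mod a)%nat.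
Proof.
  rewrite Nat.Div0.mul_mod, (Nat.Div0.mul_mod x x). symmetry.
  rewrite Nat.Div0.mul_mod, (Nat.Div0.mul_mod (x mod a) (x mod a)), !Nat.Div0.mod_mod. reflexivity.
Qed.

Lemma PPD q b k c : primeZ q -> ~ Nat.divide q b -> Nat.divide (q ^ k) (b * c) -> Nat.divide (q ^ k) c.
Proof.
  intros Hq Hb. pose proof (primeZ_ge2 q Hq) as Hq2. revert c. induction k; intros c H.
  - simpl. apply Nat.divide_1_l.
  - assert (Hqc : Nat.divide q (b * c)).
    { eapply Nat.divide_trans; [|exact H]. simpl. apply Nat.divide_factor_l. }
    destruct (primeZ_mult q b c Hq Hqc) as [D|[c' Hc']]; [contradiction|]. subst c.
    simpl. rewrite Nat.mul_comm. apply Nat.mul_divide_mono_r. apply IHk.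
    simpl in H. rewrite Nat.mul_assoc in H. rewrite (Nat.mul_comm q) in H.
    apply Nat.mul_divide_cancel_r in H; [exact H|lia].
Qed.

Lemma CRT q k b c : primeZ q -> ~ Nat.divide q b ->
  Nat.divide (q ^ k) c -> Nat.divide b c -> Nat.divide (q ^ k * b) c.
Proof.
  intros Hq Hb H1 [c'' ->]. rewrite Nat.mul_comm in H1.
  apply (PPD q b k c'' Hq Hb) in H1. destruct H1 as [t ->]. exists t. ring.
Qed.

Lemma filter_length_perm (f : nat * nat -> bool) l l' : Permutation l l' ->
  length (filter f l) = length (filter f l').
Proof.
  induction 1; simpl; auto.
  - destruct (f x); simpl; auto.
  - destruct (f x), (f y); simpl; auto.
  - congruence.
Qed.

Lemma filter_prod_length (P Q : nat -> bool) la lb :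
  length (filter (fun yz => andb (P (fst yz)) (Q (snd yz))) (list_prod la lb)) =
  (length (filter P la) * length (filter Q lb))%nat.
Proof.
  induction la as [|y la IH]; simpl; auto.
  rewrite filter_app, length_app, IH.
  assert (E : length (filter (fun yz => andb (P (fst yz)) (Q (snd yz))) (map (fun z => (y, z)) lb)) =
              if P y then length (filter Q lb) else 0%nat).
  { clear IH. induction lb as [|z lb IHb]; simpl; [destruct (P y); auto|].
    destruct (P y); simpl in *; [destruct (Q z); simpl|]; rewrite IHb; auto. }
  rewrite E. destruct (P y); simpl; lia.
Qed.

Lemma cntS_mult q k m : primeZ q -> ~ Nat.divide q m -> (1 <= m)%nat ->
  cntS (q ^ k * m) = (cntS (q ^ k) * cntS m)%nat.
Proof.
  intros Hq Hm Hm1. pose proof (primeZ_ge2 q Hq).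
  set (a := (q ^ k)%nat). assert (Ha : (1 <= a)%nat) by (unfold a; pose proof (Nat.pow_nonzero q k); lia).
  set (b := m).
  assert (HCRT : forall c, Nat.divide a c -> Nat.divide b c -> Nat.divide (a * b) c) by (intros; apply CRT; auto).
  set (h := fun x => ((x mod a)%nat, (x mod b)%nat)).
  set (Pa := fun y => Nat.eqb ((y * y * y) mod a) 0).
  set (Pb := fun y => Nat.eqb ((y * y * y) mod b) 0).
  unfold cntS, xs. fold Pa Pb.
  assert (E1 : filter (fun x => Nat.eqb ((x * x * x) mod (a * b)) 0) (seq 0 (a * b)) =
               filter (fun x => (fun yz => andb (Pa (fst yz)) (Pb (snd yz))) (h x)) (seq 0 (a * b))).
  { apply filter_ext. intros x. unfold h, Pa, Pb; simpl. rewrite <- !mod3.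
    destruct (Nat.eqb_spec ((x * x * x) mod (a * b)) 0) as [E|E];
    destruct (Nat.eqb_spec ((x * x * x) mod a) 0) as [E2|E2];
    destruct (Nat.eqb_spec ((x * x * x) mod b) 0) as [E3|E3]; simpl; auto; exfalso.
    all: first [
      (apply E3, Nat.Lcm0.mod_divide; apply Nat.Lcm0.mod_divide in E;
       eapply Nat.divide_trans; [apply Nat.divide_factor_r|exact E])
    | (apply E2, Nat.Lcm0.mod_divide; apply Nat.Lcm0.mod_divide in E;
       eapply Nat.divide_trans; [apply Nat.divide_factor_l|exact E])
    | (apply E, Nat.Lcm0.mod_divide; apply HCRT; apply Nat.Lcm0.mod_divide; auto) ]. }
  rewrite E1.
  assert (E2 : filter (fun x => (fun yz => andb (Pa (fst yz)) (Pb (snd yz))) (h x)) (seq 0 (a * b)) =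
    filter (fun x => (fun yz => andb (Pa (fst yz)) (Pb (snd yz))) (h x)) (seq 0 (a * b))) by reflexivity.
  assert (Hmap : forall l, length (filter (fun x => (fun yz => andb (Pa (fst yz)) (Pb (snd yz))) (h x)) l) =
       length (filter (fun yz => andb (Pa (fst yz)) (Pb (snd yz))) (map h l))).
  { induction l; simpl; auto. match goal with |- context [if ?c then _ else _] => destruct c end; simpl; auto. }
  rewrite Hmap.
  assert (HP : Permutation (map h (seq 0 (a * b))) (list_prod (seq 0 a) (seq 0 b))).
  { assert (Hnd : NoDup (map h (seq 0 (a * b)))).
    { apply NoDup_map_NoDup_ForallPairs; [|apply seq_NoDup].
      intros x y Hx Hy E. apply in_seq in Hx, Hy. unfold h in E. inversion E as [[Ea Eb]].
      assert (Hdiv : forall x y, (y <= x)%nat -> (x mod a = y mod a)%nat -> (x mod b = y mod b)%nat ->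
                 Nat.divide (a * b) (x - y)%nat).
      { intros x0 y0 Hle Ea0 Eb0. apply HCRT.
        - exists (x0 / a - y0 / a)%nat. rewrite Nat.mul_sub_distr_r.
          pose proof (Nat.div_mod_eq x0 a). pose proof (Nat.div_mod_eq y0 a). lia.
        - exists (x0 / b - y0 / b)%nat. rewrite Nat.mul_sub_distr_r.
          pose proof (Nat.div_mod_eq x0 b). pose proof (Nat.div_mod_eq y0 b). lia. }
      destruct (Nat.le_ge_cases y x) as [Hle|Hle].
      - destruct (Hdiv x y Hle Ea Eb) as [t Ht].
        destruct t; [lia|]. simpl in Ht. lia.
      - destruct (Hdiv y x Hle (eq_sym Ea) (eq_sym Eb)) as [t Ht].
        destruct t; [lia|]. simpl in Ht. lia. }
    assert (Hinc : incl (map h (seq 0 (a * b))) (list_prod (seq 0 a) (seq 0 b))).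
    { intros [y z] Hyz. apply in_map_iff in Hyz. destruct Hyz as [x [E _]]. unfold h in E.
      inversion E. apply in_prod_iff. split; apply in_seq; split; try lia.
      - apply Nat.mod_upper_bound; lia.
      - apply Nat.mod_upper_bound; lia. }
    apply NoDup_Permutation; auto.
    - apply NoDup_list_prod'; apply seq_NoDup.
    - intros yz. split; [apply Hinc|]. apply NoDup_length_incl; auto.
      rewrite length_prod, length_map, !length_seq. lia. }
  rewrite (filter_length_perm _ _ _ HP), filter_prod_length. reflexivity.
Qed.

End H9.
Import H9.

Module H10.

Lemma val_div p m k j : primeZ p -> ~ Nat.divide p m ->
  (Nat.divide (p ^ k) (p ^ j * m) <-> (k <= j)%nat).
Proof.
  intros Hp Hm. pose proof (primeZ_ge2 p Hp). split.
  - intros [c Hc]. destruct (Nat.le_gt_cases k j) as [Hle|Hgt]; auto. exfalso.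
    replace k with (j + (k - j))%nat in Hc by lia. rewrite Nat.pow_add_r in Hc.
    assert (Hc' : (p ^ j * m = p ^ j * (c * p ^ (k - j)))%nat). { rewrite Hc. set (A := (p ^ j)%nat). set (B := (p ^ (k - j))%nat). ring. }
    apply Nat.mul_cancel_l in Hc'; [|apply Nat.pow_nonzero; lia].
    apply Hm. exists (c * p ^ (k - j - 1))%nat. rewrite Hc'.
    assert (Et : (k - j = S (k - j - 1))%nat) by lia. set (t := (k - j - 1)%nat) in *.
    rewrite Et. simpl. ring.
  - intros Hle. exists (p ^ (j - k) * m)%nat. replace j with (k + (j - k))%nat at 1 by lia.
    rewrite Nat.pow_add_r. ring.
Qed.

Lemma ndiv_cube p m : primeZ p -> ~ Nat.divide p m -> ~ Nat.divide p (m * m * m).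
Proof.
  intros Hp Hm D. destruct (primeZ_mult p (m * m) m Hp D) as [D'|D']; auto.
  destruct (primeZ_mult p m m Hp D'); auto.
Qed.

Lemma cube_iff p k x : primeZ p ->
  (Nat.divide (p ^ k) (x * x * x) <-> Nat.divide (p ^ ((k + 2) / 3)) x).
Proof.
  intros Hp. destruct (Nat.eq_dec x 0) as [->|Hx].
  - split; intros; apply Nat.divide_0_r.
  - destruct (pow_decomp p x Hp ltac:(lia)) as [v [m [-> [Hm Hm1]]]].
    replace (p ^ v * m * (p ^ v * m) * (p ^ v * m))%nat with (p ^ (v + v + v) * (m * m * m))%nat
      by (rewrite !Nat.pow_add_r; ring).
    rewrite (val_div p (m * m * m) k (v + v + v) Hp (ndiv_cube p m Hp Hm)).
    rewrite (val_div p m ((k + 2) / 3) v Hp Hm).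
    split; intros H.
    + assert (((k + 2) / 3 < S v)%nat) by (apply Nat.Div0.div_lt_upper_bound; lia). lia.
    + assert (H3 : (3 * ((k + 2) / 3) <= 3 * v)%nat) by lia.
      pose proof (Nat.div_mod_eq (k + 2) 3). pose proof (Nat.mod_upper_bound (k + 2) 3 ltac:(lia)). lia.
Qed.

Lemma filter_false (f : nat -> bool) l : (forall x, In x l -> f x = false) -> filter f l = [].
Proof. induction l; simpl; intros H; auto. rewrite H by auto. apply IHl. intros; apply H; auto. Qed.

Lemma count_mult d q : (1 <= d)%nat ->
  length (filter (fun x => Nat.eqb (x mod d) 0) (seq 0 (d * q))) = q.
Proof.
  intros Hd. induction q.
  - rewrite Nat.mul_0_r. reflexivity.
  - replace (d * S q)%nat with (d * q + d)%nat by ring.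
    rewrite seq_app, filter_app, length_app, IHq. simpl (0 + d * q)%nat.
    assert (Es : seq (d * q) d = (d * q)%nat :: seq (S (d * q)) (d - 1)).
    { destruct d as [|d']; [lia|]. replace (S d' - 1)%nat with d' by lia. reflexivity. }
    rewrite Es. simpl filter. rewrite (Nat.mul_comm d q), Nat.Div0.mod_mul. simpl.
    rewrite filter_false; [simpl; lia|].
    intros x Hx. apply in_seq in Hx. apply Nat.eqb_neq.
    replace x with ((x - q * d) + q * d)%nat by lia.
    rewrite Nat.Div0.mod_add, Nat.mod_small by lia. lia.
Qed.

Lemma cntS_pow p k : primeZ p -> cntS (p ^ k) = (p ^ (k - (k + 2) / 3))%nat.
Proof.
  intros Hp. pose proof (primeZ_ge2 p Hp). set (e := ((k + 2) / 3)%nat).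
  assert (He : (e <= k)%nat).
  { unfold e. destruct k; [simpl; lia|]. apply Nat.Div0.div_le_upper_bound. lia. }
  unfold cntS, xs.
  rewrite (filter_ext_in _ (fun x => Nat.eqb (x mod p ^ e) 0)).
  - replace (p ^ k)%nat with (p ^ e * p ^ (k - e))%nat by (rewrite <- Nat.pow_add_r; f_equal; lia).
    apply count_mult. pose proof (Nat.pow_nonzero p e). lia.
  - intros x _. apply Bool.eq_iff_eq_true. rewrite !Nat.eqb_eq, !Nat.Lcm0.mod_divide.
    apply cube_iff; auto.
Qed.

End H10.
Import H10.

Module H11.
Local Open Scope C_scope.

Lemma a_pow p k : primeZ p -> a_cyclic (p ^ k) = (p ^ (k - (k + 2) / 3))%nat.
Proof.
  intros Hp. pose proof (primeZ_ge2 p Hp). rewrite a_cyclic_cntS.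
  - apply cntS_pow; auto.
  - pose proof (Nat.pow_nonzero p k). lia.
Qed.

Lemma e_rec k : ((3 + k) - (3 + k + 2) / 3 = (k - (k + 2) / 3) + 2)%nat.
Proof.
  replace (3 + k + 2)%nat with (k + 2 + 1 * 3)%nat by lia. rewrite Nat.div_add by lia.
  assert (((k + 2) / 3 <= k)%nat \/ k = 0%nat).
  { destruct k; [right; auto|left]. apply Nat.Div0.div_le_upper_bound. lia. }
  destruct H as [H|H]; [lia|subst; reflexivity].
Qed.

Lemma local_series p s : primeZ p -> (1 < Re s)%R ->
  is_series (fun k => RtoC (INR (a_cyclic (p ^ k))) * (cpow (INR p) (- s)) ^ k)
    ((1 + cpow (INR p) (- s) + RtoC (INR p) * (cpow (INR p) (- s)) ^ 2) /
     (1 - RtoC (INR p) ^ 2 * (cpow (INR p) (- s)) ^ 3)).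
Proof.
  intros Hp Hs. pose proof (primeZ_ge2 p Hp) as Hp2.
  set (z := cpow (INR p) (- s)).
  set (T := fun k => RtoC (INR (a_cyclic (p ^ k))) * z ^ k).
  assert (HP : (2 <= INR p)%R) by (apply (le_INR 2); auto).
  assert (Hlp : (0 < ln (INR p))%R) by (rewrite <- ln_1; apply ln_increasing; lra).
  assert (Hz : Cmod z = exp (- Re s * ln (INR p))).
  { unfold z. rewrite Cmod_cpow. f_equal. }
  set (q := (INR p * Cmod z)%R).
  assert (Hq : (0 <= q < 1)%R).
  { unfold q. rewrite Hz. split.
    - apply Rmult_le_pos; [lra|left; apply exp_pos].
    - rewrite <- (exp_ln (INR p)) at 1 by lra. rewrite <- exp_plus.
      rewrite <- exp_0. apply exp_increasing. nra. }
  assert (Hzq : (Cmod z <= q)%R).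
  { unfold q. pose proof (Cmod_ge_0 z). nra. }
  assert (HT : forall k, T k = RtoC (INR p ^ (k - (k + 2) / 3)) * z ^ k).
  { intros k. unfold T. rewrite a_pow, pow_INR; auto. }
  assert (Hbound : forall k, (Cmod (T k) <= q ^ k)%R).
  { intros k. rewrite HT, Cmod_mult, Cmod_pow, Cmod_R, Rabs_right by (apply Rle_ge, pow_le; lra).
    unfold q. rewrite Rpow_mult_distr. apply Rmult_le_compat_r; [apply pow_le, Cmod_ge_0|].
    apply Rle_pow; [lra|lia]. }
  assert (Hex : ex_series T).
  { apply (ex_series_le (K:=C_AbsRing) (V:=C_CompleteNormedModule) T (fun k => q ^ k)%R).
    - intros n. exact (Hbound n).
    - apply ex_series_geom. rewrite Rabs_right; lra. }
  assert (HSS0 : exists SS : C, is_series T SS) by (destruct Hex as [l Hl]; exists l; exact Hl).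
  destruct HSS0 as [SS HSS].
  set (c := RtoC (INR p) ^ 2 * z ^ 3).
  assert (Hrec : forall k, T (3 + k)%nat = c * T k).
  { intros k. rewrite !HT, e_rec, pow_add, RtoC_mult, !RtoC_pow. unfold c. rewrite Cpow_add_r. ring. }
  assert (H1 : is_series (fun k => T (3 + k)%nat) (SS - sum_n T 2)).
  { apply is_series_incr_n; [lia|]. simpl Nat.pred.
    assert (Ep : (SS - sum_n T 2) + sum_n T 2 = SS) by ring.
    assert (HSS' : is_series T ((SS - sum_n T 2) + sum_n T 2)) by (rewrite Ep; exact HSS). exact HSS'. }
  assert (H2 : is_series (fun k => T (3 + k)%nat) (c * SS)).
  { apply (is_series_ext (fun k => scal c (T k))). intros k. rewrite Hrec. reflexivity.
    exact (is_series_scal (K:=C_AbsRing) (V:=C_NormedModule) c T SS HSS). }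
  assert (E : SS - sum_n T 2 = c * SS).
  { apply is_series_Ccv in H1. apply is_series_Ccv in H2. exact (Ccv_unique _ _ _ H1 H2). }
  assert (Es : sum_n T 2 = 1 + z + RtoC (INR p) * z ^ 2).
  { rewrite !sum_Sn, sum_O. change plus with Cplus. rewrite !HT. simpl. 
    rewrite ?Rmult_1_r. ring. }
  assert (Hc : 1 - c <> 0).
  { intros E0. assert (Ec : c = 1) by (replace c with (1 - (1 - c)) by ring; rewrite E0; ring).
    assert (Hm : Cmod c = 1%R) by (rewrite Ec; apply Cmod_1).
    unfold c in Hm. rewrite Cmod_mult, !Cmod_pow, Cmod_R, Rabs_right in Hm by lra.
    assert (Hm' : (q ^ 2 * Cmod z = 1)%R) by (rewrite <- Hm; unfold q; ring).
    pose proof (Cmod_ge_0 z). assert (q ^ 2 * Cmod z <= q ^ 2 * q)%R by (apply Rmult_le_compat_l; [apply pow_le|]; lra).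
    assert (q ^ 2 * q < 1)%R by (simpl; nra). lra. }
  assert (SSv : SS = (1 + z + RtoC (INR p) * z ^ 2) / (1 - c)).
  { rewrite <- Es. field_simplify_eq; auto. replace (- SS * c) with (- (c * SS)) by ring. rewrite <- E. ring. }
  rewrite <- SSv. exact HSS.
Qed.

End H11.
Import H11.

Module H12.
Local Open Scope C_scope.

Lemma cpow_12 (x : R) s : (0 < x)%R -> cpow x (1 - 2 * s) = RtoC x * (cpow x (- s)) ^ 2.
Proof.
  intros Hx. replace (1 - 2 * s) with (1 + (- s + - s)) by ring.
  rewrite !cpow_add, cpow_real_one by auto. ring.
Qed.

Lemma cpow_23 (x : R) s : (0 < x)%R -> cpow x (2 - 3 * s) = RtoC x ^ 2 * (cpow x (- s)) ^ 3.
Proof.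
  intros Hx. replace (2 - 3 * s) with (1 + (1 + (- s + (- s + - s)))) by ring.
  rewrite !cpow_add, cpow_real_one by auto. ring.
Qed.

Lemma part1 : forall p : nat, prime (Z.of_nat p) ->
     exists sigma0 : R, forall s : C, (sigma0 < Re s)%R ->
       is_series
         (fun k : nat => Cmult (RtoC (INR (a_cyclic (p ^ k))))
                               (cpow (INR p) (- (RtoC (INR k) * s))))
         ((1 + cpow (INR p) (- s) + cpow (INR p) (1 - 2 * s))
          / (1 - cpow (INR p) (2 - 3 * s))).
Proof.
  intros p Hp. exists 1%R. intros s Hs.
  assert (HP : (0 < INR p)%R) by (pose proof (primeZ_ge2 p Hp); apply (lt_INR 0); lia).
  rewrite cpow_12, cpow_23 by auto.
  eapply is_series_ext; [|apply (local_series p s Hp Hs)].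
  intros k. simpl. rewrite cpow_INR_mul. reflexivity.
Qed.

End H12.
Import H12.

Module H13.
Local Open Scope C_scope.

Lemma tel : is_series (fun n => / (INR (S n) * INR (S (S n))))%R 1%R.
Proof.
  assert (Hs : forall n, sum_n (fun n => / (INR (S n) * INR (S (S n))))%R n = (1 - / INR (S (S n)))%R).
  { induction n.
    - rewrite sum_O. change (/ (INR 1 * INR 2) = 1 - / INR 2)%R. simpl. field.
    - rewrite sum_Sn, IHn. change plus with Rplus.
      change ((1 - / INR (S (S n))) + / (INR (S (S n)) * INR (S (S (S n)))) = 1 - / INR (S (S (S n))))%R.
      rewrite !S_INR. pose proof (pos_INR n). field. lra. }
  assert (HL : is_lim_seq (sum_n (fun n => / (INR (S n) * INR (S (S n))))%R) 1%R).
  { refine (is_lim_seq_ext (fun n => 1 - / INR (S (S n)))%R _ _ _ _); [intros; rewrite Hs; auto|].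
    assert (H : is_lim_seq (fun n => INR (S (S n))) p_infty).
    { pose proof is_lim_seq_INR as HI. apply (is_lim_seq_incr_n INR 2 p_infty) in HI.
      eapply is_lim_seq_ext; [|exact HI]. intros n. cbv beta. f_equal. lia. }
    apply is_lim_seq_inv in H; [|discriminate].
    assert (H2 : is_lim_seq (fun n => 1 - / INR (S (S n)))%R (1 - 0)%R).
    { apply is_lim_seq_minus'; [apply is_lim_seq_const|exact H]. }
    replace (1 - 0)%R with 1%R in H2 by ring. exact H2. }
  exact HL.
Qed.

Lemma sum_n_mono (b : nat -> R) N k : (forall n, 0 <= b n)%R -> (sum_n b N <= sum_n b (N + k))%R.
Proof.
  intros Hb. induction k.
  - rewrite Nat.add_0_r. lra.
  - rewrite Nat.add_succ_r, sum_Sn. change plus with Rplus. specialize (Hb (S (N + k))). lra.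
Qed.

Lemma Rseries_partial_le (b : nat -> R) lb N : (forall n, 0 <= b n)%R -> is_series b lb -> (sum_n b N <= lb)%R.
Proof.
  intros Hb H. destruct (Rle_lt_dec (sum_n b N) lb) as [?|Hlt]; auto. exfalso.
  destruct (Rseries_eps b lb H (sum_n b N - lb)%R ltac:(lra)) as [J HJ].
  specialize (HJ (N + J)%nat ltac:(lia)). pose proof (sum_n_mono b N J Hb).
  apply Rabs_def2 in HJ. lra.
Qed.

Lemma Cmod_sum_n (a : nat -> C) (b : nat -> R) N : (forall n, Cmod (a n) <= b n)%R -> (Cmod (sum_n a N) <= sum_n b N)%R.
Proof.
  intros H. induction N.
  - rewrite !sum_O. auto.
  - rewrite !sum_Sn. change (Cmod (sum_n a N + a (S N)) <= sum_n b N + b (S N))%R.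
    eapply Rle_trans; [apply Cmod_triangle|]. specialize (H (S N)). lra.
Qed.

Lemma Csub0 (x : C) : x - 0 = x.
Proof. ring. Qed.

Lemma bound_series (a : nat -> C) (b : nat -> R) (l : C) (lb : R) : is_series a l -> is_series b lb ->
  (forall n, Cmod (a n) <= b n)%R -> (Cmod l <= lb)%R.
Proof.
  intros Ha Hb H. rewrite <- (Csub0 l).
  apply (Ccv_le (sum_n a)); [apply is_series_Ccv; auto|].
  exists O. intros n _. rewrite Csub0.
  eapply Rle_trans; [apply Cmod_sum_n; exact H|].
  apply Rseries_partial_le; auto. intros m. eapply Rle_trans; [apply Cmod_ge_0|apply H].
Qed.

Lemma Cmod_cpow3 (n : nat) w : (1 <= INR n)%R -> (3 <= Re w)%R ->
  (Cmod (cpow (INR n) (- w)) <= / (INR n ^ 3))%R.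
Proof.
  intros Hn Hs. rewrite Cmod_cpow.
  assert (Hl : (0 <= ln (INR n))%R). { rewrite <- ln_1. apply ln_le; lra. }
  replace (/ (INR n ^ 3))%R with (exp (-3 * ln (INR n)))%R.
  - apply exp_le. unfold Re in *. simpl. nra.
  - replace (-3 * ln (INR n))%R with (- (ln (INR n) + ln (INR n) + ln (INR n)))%R by ring.
    rewrite exp_Ropp, !exp_plus, exp_ln by lra. simpl. f_equal. ring.
Qed.

Lemma dir_ex (a : nat -> C) : (forall n, Cmod (a n) <= / (INR (S n) ^ 2))%R ->
  ex_series a /\ ex_series (fun n => Cmod (a n)).
Proof.
  intros H.
  set (b := fun n => (2 * / (INR (S n) * INR (S (S n))))%R).
  assert (Hb : ex_series b).
  { exists (2 * 1)%R. apply (is_series_scal (K:=R_AbsRing) (V:=R_NormedModule) 2%R _ _ tel). }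
  assert (Hab : forall n, (Cmod (a n) <= b n)%R).
  { intros n. eapply Rle_trans; [apply H|]. unfold b.
    rewrite (S_INR (S n)). set (x := INR (S n)).
    assert (Hx : (1 <= x)%R) by (unfold x; rewrite S_INR; pose proof (pos_INR n); lra).
    replace (/ (x ^ 2))%R with ((/ x) * (/ x))%R by (field; lra).
    replace (2 * / (x * (x + 1)))%R with ((/ x) * (/ ((x + 1) / 2)))%R by (field; lra).
    apply Rmult_le_compat_l; [left; apply Rinv_0_lt_compat; lra|].
    apply Rinv_le_contravar; lra. }
  split.
  - apply (ex_series_le (K:=C_AbsRing) (V:=C_CompleteNormedModule) a b); auto.
  - apply (ex_series_le (K:=R_AbsRing) (V:=R_CompleteNormedModule) (fun n => Cmod (a n)) b); auto.
    intros n. change (Rabs (Cmod (a n)) <= b n)%R. rewrite Rabs_right by (apply Rle_ge, Cmod_ge_0). auto.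
Qed.

Lemma Cgeom (z : C) : (Cmod z < 1)%R -> is_series (fun k => z ^ k) (/ (1 - z)).
Proof.
  intros Hz. assert (Hz1 : 1 - z <> 0).
  { intros E. assert (z = 1) by (replace z with (1 - (1 - z)) by ring; rewrite E; ring).
    subst. rewrite Cmod_1 in Hz. lra. }
  assert (Hs : forall n, sum_n (fun k => z ^ k) n = (1 - z ^ (S n)) / (1 - z)).
  { induction n.
    - rewrite sum_O. simpl. field. auto.
    - rewrite sum_Sn, IHn. change ((1 - z ^ S n) / (1 - z) + z ^ S n = (1 - z ^ S (S n)) / (1 - z)).
      simpl. field. auto. }
  apply is_series_Ccv. intros eps He.
  assert (Hm : (0 < Cmod (1 - z))%R) by (apply Cmod_gt_0; auto).
  assert (Hg : is_lim_seq (fun n => Cmod z ^ n)%R 0%R).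
  { apply is_lim_seq_geom. rewrite Rabs_right; [lra|apply Rle_ge, Cmod_ge_0]. }
  apply is_lim_seq_spec in Hg. destruct (Hg (mkposreal _ (Rmult_lt_0_compat _ _ He Hm))) as [N HN].
  exists N. intros n Hn. rewrite Hs.
  replace ((1 - z ^ S n) / (1 - z) - / (1 - z)) with (- (z ^ S n) * / (1 - z)) by (field; auto).
  rewrite Cmod_mult, Cmod_opp, Cmod_inv, Cmod_pow by auto.
  specialize (HN (S n) ltac:(lia)). simpl in HN. rewrite Rminus_0_r, Rabs_right in HN.
  2: { apply Rle_ge. apply Rmult_le_pos; [apply Cmod_ge_0|apply pow_le, Cmod_ge_0]. }
  apply (Rmult_lt_reg_r (Cmod (1 - z))); auto. rewrite Rmult_assoc, Rinv_l by lra. simpl. lra.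
Qed.

Lemma Ccv_inv u a : Ccv u a -> a <> 0 -> Ccv (fun n => / u n) (/ a).
Proof.
  intros H Ha eps He. set (m := Cmod a). assert (Hm : (0 < m)%R) by (apply Cmod_gt_0; auto).
  assert (Hpos : (0 < eps * m * m / 2)%R).
  { apply Rmult_lt_0_compat; [|lra]. apply Rmult_lt_0_compat; [apply Rmult_lt_0_compat|]; lra. }
  destruct (H (Rmin (m / 2) (eps * m * m / 2)) ltac:(apply Rmin_glb_lt; lra)) as [N HN].
  exists N. intros n Hn. specialize (HN n Hn).
  assert (H1 : (Cmod (u n - a) < m / 2)%R) by (eapply Rlt_le_trans; [exact HN|apply Rmin_l]).
  assert (H2 : (Cmod (u n - a) < eps * m * m / 2)%R) by (eapply Rlt_le_trans; [exact HN|apply Rmin_r]).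
  assert (Hu : (m / 2 <= Cmod (u n))%R).
  { pose proof (Cmod_triangle (u n) (a - u n)). replace (u n + (a - u n)) with a in H0 by ring.
    replace (a - u n) with (- (u n - a)) in H0 by ring. rewrite Cmod_opp in H0. fold m in H0. lra. }
  assert (Hun : u n <> 0) by (intros E; rewrite E, Cmod_0 in Hu; lra).
  replace (/ u n - / a) with (- (u n - a) * / (u n * a)) by (field; auto).
  rewrite Cmod_mult, Cmod_opp, Cmod_inv, Cmod_mult by (apply Cmult_neq_0; auto). fold m.
  assert (Hp : (m * m / 2 <= Cmod (u n) * m)%R) by nra.
  assert (Hi : (/ (Cmod (u n) * m) <= / (m * m / 2))%R) by (apply Rinv_le_contravar; nra).
  assert (Hc : (0 <= Cmod (u n - a))%R) by apply Cmod_ge_0.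
  eapply Rle_lt_trans; [apply Rmult_le_compat_l; [exact Hc|exact Hi]|].
  apply (Rmult_lt_reg_r (m * m / 2)); [nra|]. rewrite Rmult_assoc, Rinv_l by nra. lra.
Qed.

Lemma pp_ext f g N : (forall p, primeZ p -> f p = g p) -> prime_prod f N = prime_prod g N.
Proof.
  intros H. induction N.
  - rewrite !prime_prod_0. auto.
  - rewrite !prime_prod_S, IHN. destruct prime_dec as [Hp|Hp]; auto. rewrite H; auto.
Qed.

Lemma pp_mult f g N : prime_prod (fun p => f p * g p) N = prime_prod f N * prime_prod g N.
Proof.
  induction N.
  - rewrite !prime_prod_0. ring.
  - rewrite !prime_prod_S, IHN. destruct prime_dec; ring.
Qed.

Lemma pp_one N : prime_prod (fun _ => 1) N = 1.
Proof. induction N. apply prime_prod_0. rewrite prime_prod_S, IHN. destruct prime_dec; ring. Qed.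

End H13.
Import H13.

Module H14.
Local Open Scope C_scope.

Lemma INR_p_pos p : primeZ p -> (2 <= INR p)%R.
Proof. intros Hp. pose proof (primeZ_ge2 p Hp). apply (le_INR 2). auto. Qed.

Lemma one_minus_nz (w : C) : (Cmod w < 1)%R -> 1 - w <> 0.
Proof.
  intros H E. assert (w = 1) by (replace w with (1 - (1 - w)) by ring; rewrite E; ring).
  subst. rewrite Cmod_1 in H. lra.
Qed.

Lemma q_lt1 p s : primeZ p -> (1 < Re s)%R -> (INR p * Cmod (cpow (INR p) (- s)) < 1)%R.
Proof.
  intros Hp Hs. pose proof (INR_p_pos p Hp) as HP.
  assert (Hlp : (0 < ln (INR p))%R) by (rewrite <- ln_1; apply ln_increasing; lra).
  rewrite Cmod_cpow. rewrite <- (exp_ln (INR p)) at 1 by lra. rewrite <- exp_plus.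
  rewrite <- exp_0. apply exp_increasing. unfold Re in *. simpl. nra.
Qed.

Lemma Fcpow_mul w q k m : primeZ q -> (1 <= m)%nat ->
  cpow (INR (q ^ k * m)) w = cpow (INR (q ^ k)) w * cpow (INR m) w.
Proof.
  intros Hq Hm. pose proof (primeZ_ge2 q Hq). rewrite mult_INR. apply cpow_mulb.
  - apply lt_0_INR. pose proof (Nat.pow_nonzero q k). lia.
  - apply lt_0_INR. lia.
Qed.

Lemma zeta_euler (w : C) : (3 <= Re w)%R ->
  is_series (fun n => cpow (INR (S n)) (- w)) (zeta w) /\ zeta w <> 0 /\
  filterlim (prime_prod (fun p => / (1 - cpow (INR p) (- w)))) eventually (locally (zeta w)).
Proof.
  intros Hw. set (F := fun n => cpow (INR n) (- w)).
  assert (HF1 : F 1%nat = 1) by apply cpow_one_base.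
  assert (Hbd : forall n, (Cmod (F (S n)) <= / (INR (S n) ^ 2))%R).
  { intros n. assert (Hx : (1 <= INR (S n))%R) by (rewrite S_INR; pose proof (pos_INR n); lra).
    eapply Rle_trans; [apply Cmod_cpow3; auto|]. set (x := INR (S n)) in *. apply Rinv_le_contravar.
    - apply pow_lt; lra.
    - assert (x ^ 2 <= x ^ 2 * x)%R by (pose proof (pow_lt x 2 ltac:(lra)); nra).
      replace (x ^ 3)%R with (x ^ 2 * x)%R by ring. lra. }
  destruct (dir_ex (fun n => F (S n)) Hbd) as [[SF0 HSF0] [g Hg]].
  assert (HSF : exists SF : C, is_series (fun n => F (S n)) SF) by (exists SF0; exact HSF0).
  clear SF0 HSF0. destruct HSF as [SF HSF].
  assert (Hz : zeta w = SF) by (apply CSeries_correct; exact HSF).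
  rewrite Hz. split; [exact HSF|split].
  -
    assert (H1 : is_series (fun n => F (S (S n))) (SF - 1)).
    { apply (is_series_incr_1 (fun n => F (S n))).
      assert (E : SF - 1 + F 1%nat = SF) by (rewrite HF1; ring).
      assert (HH : is_series (fun n => F (S n)) (SF - 1 + F 1%nat)) by (rewrite E; exact HSF).
      exact HH. }
    assert (H2 : is_series (fun n => (/ 2 * / (INR (S n) * INR (S (S n))))%R) (/ 2 * 1)%R).
    { apply (is_series_scal (K:=R_AbsRing) (V:=R_NormedModule) (/ 2)%R _ _ tel). }
    assert (H3 : (Cmod (SF - 1) <= / 2 * 1)%R).
    { apply (bound_series _ _ _ _ H1 H2). intros n.
      assert (Hx : (2 <= INR (S (S n)))%R) by (rewrite !S_INR; pose proof (pos_INR n); lra).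
      eapply Rle_trans; [apply Cmod_cpow3; [lra|auto]|].
      rewrite (S_INR (S n)). set (x := INR (S n)) in *. rewrite S_INR in Hx. fold x in Hx.
      replace (/ 2 * / (x * (x + 1)))%R with (/ (2 * x * (x + 1)))%R by (field; lra).
      apply Rinv_le_contravar; [nra|]. simpl. nra. }
    intros E. rewrite E in H3. replace (0 - 1) with (- (1)) in H3 by ring.
    rewrite Cmod_m1 in H3. lra.
  - apply (euler_product F g SF); auto.
    + intros q k m Hq Hqm Hm. unfold F. apply Fcpow_mul; auto.
    + intros p Hp. eapply is_series_ext; [|apply Cgeom].
      * intros k. unfold F. rewrite pow_INR, cpow_powb; auto. pose proof (INR_p_pos p Hp); lra.
      * pose proof (q_lt1 p w Hp ltac:(lra)). pose proof (INR_p_pos p Hp).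
        pose proof (Cmod_ge_0 (cpow (INR p) (- w))). nra.
Qed.

End H14.
Import H14.

Module H15.
Local Open Scope C_scope.

Lemma a_one : a_cyclic 1 = 1%nat.
Proof. pose proof (a_pow 2 0 prime_2) as H. simpl in H. exact H. Qed.

Lemma a_le n : (a_cyclic (S n) <= S n)%nat.
Proof.
  rewrite a_cyclic_cntS by lia. unfold cntS, xs.
  pose proof (filter_length_le (fun x => Nat.eqb ((x * x * x) mod S n) 0) (seq 0 (S n))).
  rewrite length_seq in H. exact H.
Qed.

Lemma a_mul q k m : primeZ q -> ~ Nat.divide q m -> (1 <= m)%nat ->
  a_cyclic (q ^ k * m) = (a_cyclic (q ^ k) * a_cyclic m)%nat.
Proof.
  intros Hq Hqm Hm. pose proof (primeZ_ge2 q Hq). pose proof (Nat.pow_nonzero q k ltac:(lia)).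
  rewrite !a_cyclic_cntS by nia. apply cntS_mult; auto.
Qed.

Lemma D_euler (s : C) : (3 < Re s)%R ->
  exists D0 : C,
  is_series (fun n => Cmult (RtoC (INR (a_cyclic (S n)))) (cpow (INR (S n)) (- s))) D0 /\
  filterlim (prime_prod (fun p => (1 + cpow (INR p) (- s) + RtoC (INR p) * (cpow (INR p) (- s)) ^ 2) /
     (1 - RtoC (INR p) ^ 2 * (cpow (INR p) (- s)) ^ 3))) eventually (locally D0).
Proof.
  intros Hs. set (F := fun n => RtoC (INR (a_cyclic n)) * cpow (INR n) (- s)).
  assert (HF1 : F 1%nat = 1) by (unfold F; rewrite a_one, cpow_one_base; simpl; ring).
  assert (Hbd : forall n, (Cmod (F (S n)) <= / (INR (S n) ^ 2))%R).
  { intros n. assert (Hx : (1 <= INR (S n))%R) by (rewrite S_INR; pose proof (pos_INR n); lra).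
    unfold F. rewrite Cmod_mult, Cmod_R, Rabs_right by (apply Rle_ge, pos_INR).
    assert (Ha : (INR (a_cyclic (S n)) <= INR (S n))%R) by (apply le_INR, a_le).
    pose proof (Cmod_cpow3 (S n) s Hx ltac:(lra)) as Hc.
    set (x := INR (S n)) in *. pose proof (Cmod_ge_0 (cpow x (- s))).
    eapply Rle_trans; [apply Rmult_le_compat; [apply pos_INR|auto|exact Ha|exact Hc]|].
    replace (x * / x ^ 3)%R with (/ x ^ 2)%R by (field; lra). lra. }
  destruct (dir_ex (fun n => F (S n)) Hbd) as [[SF0 HSF0] [g Hg]].
  assert (HSF : exists SF : C, is_series (fun n => F (S n)) SF) by (exists SF0; exact HSF0).
  clear SF0 HSF0. destruct HSF as [SF HSF].
  exists SF. split; [exact HSF|].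
  apply (euler_product F g SF); auto.
  - intros q k m Hq Hqm Hm. unfold F. rewrite a_mul, Fcpow_mul, mult_INR, RtoC_mult by auto. ring.
  - intros p Hp. eapply is_series_ext; [|apply (local_series p s Hp ltac:(lra))].
    intros k. unfold F. rewrite pow_INR, cpow_powb; auto. pose proof (INR_p_pos p Hp); lra.
Qed.

End H15.
Import H15.

Module H16.
Local Open Scope C_scope.

Lemma Ccv_ext u v l : (forall n, u n = v n) -> Ccv v l -> Ccv u l.
Proof. intros E H eps He. destruct (H eps He) as [N HN]. exists N. intros n Hn. rewrite E. auto. Qed.

Lemma pp_inv_cv (M L : nat -> C) Z : (forall p, primeZ p -> M p * L p = 1) ->
  Ccv (prime_prod L) Z -> Z <> 0 -> Ccv (prime_prod M) (/ Z).
Proof.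
  intros HML HL HZ.
  assert (E : forall N, prime_prod M N * prime_prod L N = 1).
  { intros N. rewrite <- pp_mult. rewrite (pp_ext _ (fun _ => 1)); auto. apply pp_one. }
  apply (Ccv_ext _ (fun N => / prime_prod L N)).
  - intros N. specialize (E N). assert (prime_prod L N <> 0) by (intros H0; rewrite H0 in E;
      replace (prime_prod M N * 0) with (RtoC 0) in E by ring; apply C1_nz; auto).
    transitivity ((prime_prod M N * prime_prod L N) * / prime_prod L N).
    + field. auto.
    + rewrite E. ring.
  - apply Ccv_inv; auto.
Qed.

Lemma Cmod_cpow_lt1 p w : primeZ p -> (1 < Re w)%R -> (Cmod (cpow (INR p) (- w)) < 1)%R.
Proof.
  intros Hp Hw. pose proof (q_lt1 p w Hp Hw). pose proof (INR_p_pos p Hp).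
  pose proof (Cmod_ge_0 (cpow (INR p) (- w))). nra.
Qed.

Lemma part2 : exists sigma0 : R, forall s : C, (sigma0 < Re s)%R ->
     exists P : C,
       filterlim
         (prime_prod (fun p => 1 - cpow (INR p) (- (2 * s))
                                 - cpow (INR p) (1 - 3 * s)
                                 + cpow (INR p) (1 - 4 * s)
                                 - cpow (INR p) (2 - 4 * s)
                                 + cpow (INR p) (2 - 5 * s)))
         eventually (locally P) /\
       is_series
         (fun n : nat => Cmult (RtoC (INR (a_cyclic (S n))))
                               (cpow (INR (S n)) (- s)))
         (zeta s * zeta (2 * s - 1) * zeta (3 * s - 2) * P).
Proof.
  exists 3%R. intros s Hs.
  assert (Re2 : (Re (2 * s - 1) = 2 * Re s - 1)%R) by (unfold Re; simpl; ring).
  assert (Re3 : (Re (3 * s - 2) = 3 * Re s - 2)%R) by (unfold Re; simpl; ring).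
  destruct (D_euler s Hs) as [D0 [HD HDp]].
  destruct (zeta_euler s ltac:(lra)) as [_ [Z1nz HZ1]].
  destruct (zeta_euler (2 * s - 1) ltac:(lra)) as [_ [Z2nz HZ2]].
  destruct (zeta_euler (3 * s - 2) ltac:(lra)) as [_ [Z3nz HZ3]].
  set (P := D0 * / zeta s * / zeta (2 * s - 1) * / zeta (3 * s - 2)).
  exists P. split.
  - apply Ccv_filterlim.
    set (LD := fun p => (1 + cpow (INR p) (- s) + RtoC (INR p) * (cpow (INR p) (- s)) ^ 2) /
       (1 - RtoC (INR p) ^ 2 * (cpow (INR p) (- s)) ^ 3)).
    set (M1 := fun p => 1 - cpow (INR p) (- s)).
    set (M2 := fun p => 1 - cpow (INR p) (- (2 * s - 1))).
    set (M3 := fun p => 1 - cpow (INR p) (- (3 * s - 2))).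
    apply (Ccv_ext _ (fun N => prime_prod LD N * prime_prod M1 N * prime_prod M2 N * prime_prod M3 N)).
    + intros N. rewrite <- !pp_mult. apply pp_ext. intros p Hp.
      pose proof (INR_p_pos p Hp) as HP. assert (Hx : (0 < INR p)%R) by lra.
      set (x := INR p) in *. set (z := cpow x (- s)).
      assert (E1 : cpow x (- (2 * s)) = z ^ 2).
      { replace (- (2 * s)) with (- s + - s) by ring. rewrite cpow_add. unfold z. ring. }
      assert (E2 : cpow x (1 - 3 * s) = RtoC x * z ^ 3).
      { replace (1 - 3 * s) with (1 + (- s + (- s + - s))) by ring. rewrite !cpow_add, cpow_real_one by auto. unfold z. ring. }
      assert (E3 : cpow x (1 - 4 * s) = RtoC x * z ^ 4).
      { replace (1 - 4 * s) with (1 + (- s + (- s + (- s + - s)))) by ring. rewrite !cpow_add, cpow_real_one by auto. unfold z. ring. }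
      assert (E4 : cpow x (2 - 4 * s) = RtoC x ^ 2 * z ^ 4).
      { replace (2 - 4 * s) with (1 + (1 + (- s + (- s + (- s + - s))))) by ring. rewrite !cpow_add, cpow_real_one by auto. unfold z. ring. }
      assert (E5 : cpow x (2 - 5 * s) = RtoC x ^ 2 * z ^ 5).
      { replace (2 - 5 * s) with (1 + (1 + (- s + (- s + (- s + (- s + - s)))))) by ring. rewrite !cpow_add, cpow_real_one by auto. unfold z. ring. }
      assert (E6 : cpow x (- (2 * s - 1)) = RtoC x * z ^ 2).
      { replace (- (2 * s - 1)) with (1 + (- s + - s)) by ring. rewrite !cpow_add, cpow_real_one by auto. unfold z. ring. }
      assert (E7 : cpow x (- (3 * s - 2)) = RtoC x ^ 2 * z ^ 3).
      { replace (- (3 * s - 2)) with (1 + (1 + (- s + (- s + - s)))) by ring. rewrite !cpow_add, cpow_real_one by auto. unfold z. ring. }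
      unfold LD, M1, M2, M3. fold x. fold z. rewrite E1, E2, E3, E4, E5, E6, E7.
      assert (Hnz : 1 - RtoC x ^ 2 * z ^ 3 <> 0).
      { rewrite <- E7. apply one_minus_nz. apply Cmod_cpow_lt1; auto. lra. }
      field. exact Hnz.
    + unfold P. apply Ccv_mult; [apply Ccv_mult; [apply Ccv_mult|]|].
      * apply Ccv_filterlim. exact HDp.
      * apply (pp_inv_cv M1 (fun p => / (1 - cpow (INR p) (- s)))); auto; [|apply Ccv_filterlim; auto].
        intros p Hp. unfold M1. field. apply one_minus_nz, Cmod_cpow_lt1; auto. lra.
      * apply (pp_inv_cv M2 (fun p => / (1 - cpow (INR p) (- (2 * s - 1))))); auto; [|apply Ccv_filterlim; auto].
        intros p Hp. unfold M2. field. apply one_minus_nz, Cmod_cpow_lt1; auto. lra.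
      * apply (pp_inv_cv M3 (fun p => / (1 - cpow (INR p) (- (3 * s - 2))))); auto; [|apply Ccv_filterlim; auto].
        intros p Hp. unfold M3. field. apply one_minus_nz, Cmod_cpow_lt1; auto. lra.
  - replace (zeta s * zeta (2 * s - 1) * zeta (3 * s - 2) * P) with D0; [exact HD|].
    unfold P. field. auto.
Qed.


End H16.
Import H16.

Local Open Scope C_scope.

Theorem corollary7 :
  (forall p : nat, prime (Z.of_nat p) ->
     exists sigma0 : R, forall s : C, (sigma0 < Re s)%R ->
       is_series
         (fun k : nat => Cmult (RtoC (INR (a_cyclic (p ^ k))))
                               (cpow (INR p) (- (RtoC (INR k) * s))))
         ((1 + cpow (INR p) (- s) + cpow (INR p) (1 - 2 * s))
          / (1 - cpow (INR p) (2 - 3 * s)))) /\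
  (exists sigma0 : R, forall s : C, (sigma0 < Re s)%R ->
     exists P : C,
       filterlim
         (prime_prod (fun p => 1 - cpow (INR p) (- (2 * s))
                                 - cpow (INR p) (1 - 3 * s)
                                 + cpow (INR p) (1 - 4 * s)
                                 - cpow (INR p) (2 - 4 * s)
                                 + cpow (INR p) (2 - 5 * s)))
         eventually (locally P) /\
       is_series
         (fun n : nat => Cmult (RtoC (INR (a_cyclic (S n))))
                               (cpow (INR (S n)) (- s)))
         (zeta s * zeta (2 * s - 1) * zeta (3 * s - 2) * P)).
Proof. split; [apply part1|apply part2]. Qed.
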